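(* Let $(\mathbf T,\mathbf A,\mathrm{VAR},\mathrm{OP},\mathrm{ABS},\mathrm{FRESH},\mathrm{FRESHABS},\_[\_/\_]_\_)$ be an FS model. Then there exist functions $f:\mathrm{term}\to\mathbf T$ and $f_{Abs}:\mathrm{abs}\to\mathbf A$ such that, for all good terms $X,Y$, good abstractions $A$, all $inp:(\mathrm{index},\mathrm{term})\mathrm{input}$ and $binp:(\mathrm{bindex},\mathrm{abs})\mathrm{input}$ with good values and domains of cardinality $<|\mathrm{var}|$, and all $\delta,xs,x,ys,y$: $f(\mathrm{Var}\;xs\;x)=\mathrm{VAR}\;xs\;x$; $f(\mathrm{Op}\;\delta\;inp\;binp)=\mathrm{OP}\;\delta\;(\uparrow f\;inp)\;(\uparrow f_{Abs}\;binp)$; $f_{Abs}(\mathrm{Abs}\;xs\;x\;X)=\mathrm{ABS}\;xs\;x\;(f\;X)$; $f(X[Y/y]_{ys})=(f\;X)[(f\;Y)/y]_{ys}$; $f_{Abs}(A[Y/y]_{ys})=(f_{Abs}\;A)[(f\;Y)/y]_{ys}$; $\mathrm{fresh}\;xs\;x\;X\Rightarrow\mathrm{FRESH}\;xs\;x\;(f\;X)$; $\mathrm{freshAbs}\;xs\;x\;A\Rightarrow\mathrm{FRESHABS}\;xs\;x\;(f_{Abs}\;A)$. Moreover, if $g:\mathrm{term}\to\mathbf T$ and $g_{Abs}:\mathrm{abs}\to\mathbf A$ satisfy the same properties, then $f\;X=g\;X$ for all good terms $X$ and $f_{Abs}\;A=g_{Abs}\;A$ for all good abstractions $A$.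
   Context: Fix types $\mathrm{var}$, $\mathrm{varsort}$, $\mathrm{index}$, $\mathrm{bindex}$, $\mathrm{opsym}$, with $|\mathrm{var}|$ an infinite regular cardinal. $(\alpha,\beta)\,\mathrm{input}$ = partial functions $\alpha\to\beta\;\mathrm{option}$; $\mathrm{dom}\,f=\{i\mid f\,i\ne\mathrm{None}\}$; $\uparrow P\;inp$ means $P$ holds of all defined values of $inp$; $\uparrow g\;inp$ applies $g$ to all defined values. Terms ($\mathrm{term}$) and abstractions ($\mathrm{abs}$) are alpha-equivalence classes of the free datatypes $\mathrm{qterm}=\mathrm{qVar}\;\mathrm{varsort}\;\mathrm{var}\mid\mathrm{qOp}\;\mathrm{opsym}\;((\mathrm{index},\mathrm{qterm})\mathrm{input})\;((\mathrm{bindex},\mathrm{qabs})\mathrm{input})$, $\mathrm{qabs}=\mathrm{qAbs}\;\mathrm{varsort}\;\mathrm{var}\;\mathrm{qterm}$ ($x$ of varsort $xs$ bound in $X$ in $\mathrm{qAbs}\;xs\;x\;X$), with lifted constructors $\mathrm{Var},\mathrm{Op},\mathrm{Abs}$; $\mathrm{fresh}/\mathrm{freshAbs}\;xs\;x$: the variable $x$ of varsort $xs$ does not occur free; $\_[Y/y]_{ys}$: capture-avoiding substitution of $Y$ for free occurrences of the variable $y$ of varsort $ys$ (on terms and abstractions). Good: every $\mathrm{Op}$ node has inputs with domains of cardinality $<|\mathrm{var}|$. An FS model consists of types $\mathbf T,\mathbf A$ and operations $\mathrm{VAR}:\mathrm{varsort}\to\mathrm{var}\to\mathbf T$, $\mathrm{OP}:\mathrm{opsym}\to(\mathrm{index},\mathbf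 T)\mathrm{input}\to(\mathrm{bindex},\mathbf A)\mathrm{input}\to\mathbf T$, $\mathrm{ABS}:\mathrm{varsort}\to\mathrm{var}\to\mathbf T\to\mathbf A$, $\mathrm{FRESH}:\mathrm{varsort}\to\mathrm{var}\to\mathbf T\to\mathrm{bool}$, $\mathrm{FRESHABS}:\mathrm{varsort}\to\mathrm{var}\to\mathbf A\to\mathrm{bool}$, $\_[\_/\_]_\_:\mathbf T\to\mathbf T\to\mathrm{var}\to\mathrm{varsort}\to\mathbf T$ and $\_[\_/\_]_\_:\mathbf A\to\mathbf T\to\mathrm{var}\to\mathrm{varsort}\to\mathbf A$, satisfying, for all arguments (with $inp,binp$ ranging over inputs whose domains have cardinality $<|\mathrm{var}|$): (F1) $(ys,y)\ne(xs,x)\Rightarrow\mathrm{FRESH}\;ys\;y\;(\mathrm{VAR}\;xs\;x)$; (F2) $\uparrow(\mathrm{FRESH}\;ys\;y)\;inp\wedge\uparrow(\mathrm{FRESHABS}\;ys\;y)\;binp\Rightarrow\mathrm{FRESH}\;ys\;y\;(\mathrm{OP}\;\delta\;inp\;binp)$; (F3) $(ys,y)=(xs,x)\vee\mathrm{FRESH}\;ys\;y\;X\Rightarrow\mathrm{FRESHABS}\;ys\;y\;(\mathrm{ABS}\;xs\;x\;X)$; (S1) $(\mathrm{VAR}\;xs\;x)[Y/y]_{ys}=Y$ if $(xs,x)=(ys,y)$, else $\mathrm{VAR}\;xs\;x$; (S2) $(\mathrm{OP}\;\delta\;inp\;binp)[Y/y]_{ys}=\mathrm{OP}\;\delta\;(\uparrow(\_[Y/y]_{ys})\;inp)\;(\uparrow(\_[Y/y]_{ys})\;binp)$;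 (S3) $(xs,x)\ne(ys,y)\wedge\mathrm{FRESH}\;xs\;x\;Y\Rightarrow(\mathrm{ABS}\;xs\;x\;X)[Y/y]_{ys}=\mathrm{ABS}\;xs\;x\;(X[Y/y]_{ys})$; (R1) $y\notin\{x,x'\}\wedge\mathrm{FRESH}\;xs\;y\;X\wedge\mathrm{FRESH}\;xs\;y\;X'\wedge X[(\mathrm{VAR}\;xs\;y)/x]_{xs}=X'[(\mathrm{VAR}\;xs\;y)/x']_{xs}\Rightarrow\mathrm{ABS}\;xs\;x\;X=\mathrm{ABS}\;xs\;x'\;X'$; (R2) $\mathrm{FRESH}\;xs\;y\;X\Rightarrow\mathrm{ABS}\;xs\;x\;X=\mathrm{ABS}\;xs\;y\;(X[(\mathrm{VAR}\;xs\;y)/x]_{xs})$. *)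

(* Defs.v *)
From Stdlib Require Import Classical ClassicalEpsilon FunctionalExtensionality
  PropExtensionality Relations.Relation_Operators.

Set Implicit Arguments.

Definition lt_card (A B : Type) : Prop :=
  (exists f : A -> B, forall a1 a2, f a1 = f a2 -> a1 = a2) /\
  ~ (exists g : B -> A, forall b1 b2, g b1 = g b2 -> b1 = b2).

Definition infinite_type (V : Type) : Prop :=
  forall l : list V, exists x, ~ List.In x l.

Definition infinite_regular (V : Type) : Prop :=
  infinite_type V /\
  forall (I : Type) (F : I -> V -> Prop),
    lt_card I V -> (forall i, lt_card {x : V | F i x} V) ->
    lt_card {x : V | exists i, F i x} V.

Definition input (I A : Type) := I -> option A.
Definition dom (I A : Type) (inp : input I A) := {i : I | inp i <> None}.
Definition liftAll (I A : Type) (P : A -> Prop) (inp : input I A) : Prop :=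
  forall i a, inp i = Some a -> P a.
Definition lift (I A B : Type) (g : A -> B) (inp : input I A) : input I B :=
  fun i => option_map g (inp i).
Definition small (V I A : Type) (inp : input I A) : Prop := lt_card (dom inp) V.

Definition eqdec (A : Type) (a b : A) : bool :=
  if excluded_middle_informative (a = b) then true else false.

Section Syntax.
Variables (var varsort index bindex opsym : Type).

Inductive qterm : Type :=
| qVar : varsort -> var -> qterm
| qOp : opsym -> (index -> option qterm) -> (bindex -> option qabs) -> qterm
with qabs : Type :=
| qAbs : varsort -> var -> qterm -> qabs.

Fixpoint qFree (ys : varsort) (y : var) (X : qterm) {struct X} : Prop :=
  match X with
  | qVar xs x => (xs, x) = (ys, y)
  | qOp _ inp binp =>
      (exists i, match inp i with Some X' => qFree ys y X' | None => False end) \/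
      (exists i, match binp i with Some A => qFreeAbs ys y A | None => False end)
  end
with qFreeAbs (ys : varsort) (y : var) (A : qabs) {struct A} : Prop :=
  match A with
  | qAbs xs x X => (xs, x) <> (ys, y) /\ qFree ys y X
  end.

Definition swapv (zs : varsort) (z1 z2 : var) (xs : varsort) (x : var) : var :=
  if eqdec (xs, x) (zs, z1) then z2
  else if eqdec (xs, x) (zs, z2) then z1 else x.

Fixpoint qSwap (zs : varsort) (z1 z2 : var) (X : qterm) {struct X} : qterm :=
  match X with
  | qVar xs x => qVar xs (swapv zs z1 z2 xs x)
  | qOp d inp binp =>
      qOp d (fun i => match inp i with Some X' => Some (qSwap zs z1 z2 X') | None => None end)
            (fun i => match binp i with Some A => Some (qSwapAbs zs z1 z2 A) | None => None end)
  end
with qSwapAbs (zs : varsort) (z1 z2 : var) (A : qabs) {struct A} : qabs :=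
  match A with
  | qAbs xs x X => qAbs xs (swapv zs z1 z2 xs x) (qSwap zs z1 z2 X)
  end.

Inductive alpha : qterm -> qterm -> Prop :=
| alpha_Var : forall xs x, alpha (qVar xs x) (qVar xs x)
| alpha_Op : forall d inp inp' binp binp',
    (forall i, inp i = None <-> inp' i = None) ->
    (forall i X X', inp i = Some X -> inp' i = Some X' -> alpha X X') ->
    (forall i, binp i = None <-> binp' i = None) ->
    (forall i A A', binp i = Some A -> binp' i = Some A' -> alphaAbs A A') ->
    alpha (qOp d inp binp) (qOp d inp' binp')
with alphaAbs : qabs -> qabs -> Prop :=
| alpha_Abs : forall xs x x' X X' y,
    y <> x -> y <> x' -> ~ qFree xs y X -> ~ qFree xs y X' ->
    alpha (qSwap xs y x X) (qSwap xs y x' X') ->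
    alphaAbs (qAbs xs x X) (qAbs xs x' X').

Fixpoint qGood (X : qterm) {struct X} : Prop :=
  match X with
  | qVar _ _ => True
  | qOp _ inp binp =>
      small var inp /\ small var binp /\
      (forall i, match inp i with Some X' => qGood X' | None => True end) /\
      (forall i, match binp i with Some A => qGoodAbs A | None => True end)
  end
with qGoodAbs (A : qabs) {struct A} : Prop :=
  match A with
  | qAbs _ _ X => qGood X
  end.

(* capture-avoiding simultaneous substitution (Stoughton style) *)
Definition upd (rho : varsort -> var -> qterm) (xs : varsort) (x : var) (Z : qterm) :=
  fun ws w => if eqdec (ws, w) (xs, x) then Z else rho ws w.

Fixpoint qPsubst (rho : varsort -> var -> qterm) (X : qterm) {struct X} : qterm :=
  match X with
  | qVar xs x => rho xs x
  | qOp d inp binp =>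
      qOp d (fun i => match inp i with Some X' => Some (qPsubst rho X') | None => None end)
            (fun i => match binp i with Some A => Some (qPsubstAbs rho A) | None => None end)
  end
with qPsubstAbs (rho : varsort -> var -> qterm) (A : qabs) {struct A} : qabs :=
  match A with
  | qAbs xs x X =>
      let z := epsilon (inhabits x)
                 (fun z => forall ws w, qFreeAbs ws w (qAbs xs x X) -> ~ qFree xs z (rho ws w)) in
      qAbs xs z (qPsubst (upd rho xs x (qVar xs z)) X)
  end.

Definition qSubst (X Y : qterm) (y : var) (ys : varsort) : qterm :=
  qPsubst (upd qVar ys y Y) X.
Definition qSubstAbs (A : qabs) (Y : qterm) (y : var) (ys : varsort) : qabs :=
  qPsubstAbs (upd qVar ys y Y) A.

Definition alphaEq := clos_refl_sym_trans qterm alpha.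
Definition alphaAbsEq := clos_refl_sym_trans qabs alphaAbs.

Definition term := {P : qterm -> Prop | exists X, P = alphaEq X}.
Definition abs := {P : qabs -> Prop | exists A, P = alphaAbsEq A}.

Definition cls (X : qterm) : term := exist _ (alphaEq X) (ex_intro _ X eq_refl).
Definition clsAbs (A : qabs) : abs := exist _ (alphaAbsEq A) (ex_intro _ A eq_refl).
Definition rep (t : term) : qterm :=
  proj1_sig (constructive_indefinite_description _ (proj2_sig t)).
Definition repAbs (a : abs) : qabs :=
  proj1_sig (constructive_indefinite_description _ (proj2_sig a)).

Definition Var (xs : varsort) (x : var) : term := cls (qVar xs x).
Definition Op (d : opsym) (inp : input index term) (binp : input bindex abs) : term :=
  cls (qOp d (lift rep inp) (lift repAbs binp)).
Definition Abs (xs : varsort) (x : var) (X : term) : abs := clsAbs (qAbs xs x (rep X)).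

Definition fresh (xs : varsort) (x : var) (X : term) : Prop := ~ qFree xs x (rep X).
Definition freshAbs (xs : varsort) (x : var) (A : abs) : Prop := ~ qFreeAbs xs x (repAbs A).

Definition subst (X Y : term) (y : var) (ys : varsort) : term :=
  cls (qSubst (rep X) (rep Y) y ys).
Definition substAbs (A : abs) (Y : term) (y : var) (ys : varsort) : abs :=
  clsAbs (qSubstAbs (repAbs A) (rep Y) y ys).

Definition good (X : term) : Prop := qGood (rep X).
Definition goodAbs (A : abs) : Prop := qGoodAbs (repAbs A).

Record FSModel (T A : Type)
  (VAR : varsort -> var -> T)
  (OP : opsym -> input index T -> input bindex A -> T)
  (ABS : varsort -> var -> T -> A)
  (FRESH : varsort -> var -> T -> Prop)
  (FRESHABS : varsort -> var -> A -> Prop)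
  (substT : T -> T -> var -> varsort -> T)
  (substA : A -> T -> var -> varsort -> A) : Prop := {
  F1 : forall ys y xs x, (ys, y) <> (xs, x) -> FRESH ys y (VAR xs x);
  F2 : forall ys y d (inp : input index T) (binp : input bindex A),
         small var inp -> small var binp ->
         liftAll (FRESH ys y) inp -> liftAll (FRESHABS ys y) binp ->
         FRESH ys y (OP d inp binp);
  F3 : forall ys y xs x X, ((ys, y) = (xs, x) \/ FRESH ys y X) ->
         FRESHABS ys y (ABS xs x X);
  S1a : forall xs x Y y ys, (xs, x) = (ys, y) -> substT (VAR xs x) Y y ys = Y;
  S1b : forall xs x Y y ys, (xs, x) <> (ys, y) -> substT (VAR xs x) Y y ys = VAR xs x;
  S2 : forall d (inp : input index T) (binp : input bindex A) Y y ys,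
         small var inp -> small var binp ->
         substT (OP d inp binp) Y y ys =
         OP d (lift (fun X => substT X Y y ys) inp) (lift (fun B => substA B Y y ys) binp);
  S3 : forall xs x X Y y ys, (xs, x) <> (ys, y) -> FRESH xs x Y ->
         substA (ABS xs x X) Y y ys = ABS xs x (substT X Y y ys);
  R1 : forall xs x x' y X X', y <> x -> y <> x' ->
         FRESH xs y X -> FRESH xs y X' ->
         substT X (VAR xs y) x xs = substT X' (VAR xs y) x' xs ->
         ABS xs x X = ABS xs x' X';
  R2 : forall xs x y X, FRESH xs y X ->
         ABS xs x X = ABS xs y (substT X (VAR xs y) x xs)
}.

Definition FS_hom (T A : Type)
  (VAR : varsort -> var -> T)
  (OP : opsym -> input index T -> input bindex A -> T)
  (ABS : varsort -> var -> T -> A)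
  (FRESH : varsort -> var -> T -> Prop)
  (FRESHABS : varsort -> var -> A -> Prop)
  (substT : T -> T -> var -> varsort -> T)
  (substA : A -> T -> var -> varsort -> A)
  (f : term -> T) (fAbs : abs -> A) : Prop :=
  (forall xs x, f (Var xs x) = VAR xs x) /\
  (forall d (inp : input index term) (binp : input bindex abs),
     liftAll good inp -> small var inp ->
     liftAll goodAbs binp -> small var binp ->
     f (Op d inp binp) = OP d (lift f inp) (lift fAbs binp)) /\
  (forall xs x X, good X -> fAbs (Abs xs x X) = ABS xs x (f X)) /\
  (forall X Y y ys, good X -> good Y -> f (subst X Y y ys) = substT (f X) (f Y) y ys) /\
  (forall B Y y ys, goodAbs B -> good Y ->
     fAbs (substAbs B Y y ys) = substA (fAbs B) (f Y) y ys) /\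
  (forall xs x X, good X -> fresh xs x X -> FRESH xs x (f X)) /\
  (forall xs x B, goodAbs B -> freshAbs xs x B -> FRESHABS xs x (fAbs B)).

End Syntax.

(* Main.v *)
Require Import Defs.
From Stdlib Require Import Classical ClassicalEpsilon FunctionalExtensionality
  PropExtensionality ProofIrrelevance List Relations.Relation_Operators.
Set Implicit Arguments.


Section P1.
Variables var varsort index bindex opsym : Type.
Notation QT := (qterm var varsort index bindex opsym).
Notation QA := (qabs var varsort index bindex opsym).
Notation qV := (@qVar var varsort index bindex opsym).
Local Notation sw := (@swapv var varsort).

Section Ind.
Variables (P : QT -> Prop) (Q : QA -> Prop).
Hypothesis HV : forall xs x, P (qV xs x).
Hypothesis HO : forall d inp binp,
  (forall i X, inp i = Some X -> P X) -> (forall i A, binp i = Some A -> Q A) ->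
  P (qOp d inp binp).
Hypothesis HA : forall xs x X, P X -> Q (qAbs xs x X).

Fixpoint qt_ind2 (X : QT) : P X :=
  match X with
  | qVar _ _ _ xs x => @HV xs x
  | qOp d inp binp =>
      @HO d inp binp
        (fun i => match inp i as o return (forall X', o = Some X' -> P X') with
                  | Some Y => fun X' e =>
                      match e in _ = o return match o with Some z => P z | None => True end
                      with eq_refl => qt_ind2 Y end
                  | None => fun X' e =>
                      match e in _ = o return match o with Some z => P z | None => True end
                      with eq_refl => I end
                  end)
        (fun i => match binp i as o return (forall A', o = Some A' -> Q A') with
                  | Some Y => fun X' e =>
                      match e in _ = o return match o with Some z => Q z | None => True end
                      with eq_refl => qa_ind2 Y end
                  | None => fun X' e =>
                      match e in _ = o return match o with Some z => Q z | None => True end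
                      with eq_refl => I end
                  end)
  end
with qa_ind2 (A : QA) : Q A :=
  match A with qAbs xs x X => @HA xs x X (qt_ind2 X) end.
End Ind.

Lemma qt_ind_both (P : QT -> Prop) (Q : QA -> Prop) :
  (forall xs x, P (qV xs x)) ->
  (forall d inp binp,
    (forall i X, inp i = Some X -> P X) -> (forall i A, binp i = Some A -> Q A) ->
    P (qOp d inp binp)) ->
  (forall xs x X, P X -> Q (qAbs xs x X)) ->
  (forall X, P X) /\ (forall A, Q A).
Proof. intros; split; [apply (@qt_ind2 P Q) | apply (@qa_ind2 P Q)]; auto. Qed.

Lemma eqdec_t (A : Type) (a b : A) : a = b -> eqdec a b = true.
Proof. intros; unfold eqdec; destruct excluded_middle_informative; congruence. Qed.
Lemma eqdec_f (A : Type) (a b : A) : a <> b -> eqdec a b = false.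
Proof. intros; unfold eqdec; destruct excluded_middle_informative; congruence. Qed.



Lemma sw_a zs a b : sw zs a b zs a = b.
Proof. unfold swapv. rewrite eqdec_t; auto. Qed.
Lemma sw_b zs a b : sw zs a b zs b = a.
Proof. unfold swapv. destruct (classic ((zs,b) = (zs,a))).
  inversion H; subst. rewrite eqdec_t; auto. rewrite eqdec_f, eqdec_t; auto. Qed.
Lemma sw_o zs a b xs x : (xs, x) <> (zs, a) -> (xs, x) <> (zs, b) -> sw zs a b xs x = x.
Proof. intros. unfold swapv. rewrite !eqdec_f; auto. Qed.
Lemma sw_cases zs a b xs x :
  ((xs,x) = (zs,a) /\ sw zs a b xs x = b) \/ ((xs,x) = (zs,b) /\ sw zs a b xs x = a) \/
  ((xs,x) <> (zs,a) /\ (xs,x) <> (zs,b) /\ sw zs a b xs x = x).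
Proof.
  destruct (classic ((xs,x) = (zs,a))). left. inversion H; subst. split; auto. apply sw_a.
  destruct (classic ((xs,x) = (zs,b))). right; left. inversion H0; subst. split; auto. apply sw_b.
  right; right. repeat split; auto. apply sw_o; auto.
Qed.
Lemma sw_invol zs a b xs x : sw zs a b xs (sw zs a b xs x) = x.
Proof.
  destruct (sw_cases zs a b xs x) as [[E1 E2]|[[E1 E2]|[E0 [E1 E2]]]]; rewrite E2.
  - inversion E1; subst. apply sw_b.
  - inversion E1; subst. apply sw_a.
  - apply sw_o; auto.
Qed.
Lemma sw_inj zs a b xs x y : sw zs a b xs x = sw zs a b xs y -> x = y.
Proof. intros. rewrite <- (sw_invol zs a b xs x), <- (sw_invol zs a b xs y), H; auto. Qed.
Lemma sw_same zs a xs x : sw zs a a xs x = x.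
Proof. destruct (sw_cases zs a a xs x) as [[E1 E2]|[[E1 E2]|[E0 [E1 E2]]]]; try rewrite E2; auto;
  inversion E1; auto. Qed.
Lemma sw_pair_inj zs a b xs x ys y :
  (xs, sw zs a b xs x) = (ys, sw zs a b ys y) <-> (xs,x) = (ys,y).
Proof.
  split; intro H; inversion H; subst; auto. apply sw_inj in H2. subst; auto.
Qed.

Lemma swap_Var zs a b xs x : qSwap zs a b (qV xs x) = qV xs (sw zs a b xs x).
Proof. reflexivity. Qed.

Lemma qFree_swap_gen :
  (forall X : QT, forall zs a b ws w, qFree ws (sw zs a b ws w) (qSwap zs a b X) <-> qFree ws w X) /\
  (forall A : QA, forall zs a b ws w, qFreeAbs ws (sw zs a b ws w) (qSwapAbs zs a b A) <-> qFreeAbs ws w A).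
Proof.
  apply qt_ind_both; intros.
  all: try (simpl; apply sw_pair_inj).
  all: try (simpl; split; intros [[i Hi]|[i Hi]];
      [ left; exists i; destruct (inp i) eqn:E; [apply (proj1 (H i _ E zs a b ws w)); auto| auto]
      | right; exists i; destruct (binp i) eqn:E; [apply (proj1 (H0 i _ E zs a b ws w)); auto| auto]
      | left; exists i; destruct (inp i) eqn:E; [apply (proj2 (H i _ E zs a b ws w)); auto| auto]
      | right; exists i; destruct (binp i) eqn:E; [apply (proj2 (H0 i _ E zs a b ws w)); auto| auto]]).
  all: try (simpl; rewrite H; split; intros [H1 H2]; split; auto; intro E; apply H1;
            [apply sw_pair_inj; auto | apply sw_pair_inj in E; auto]).
Qed.

Lemma qFree_swap zs a b ws w (X : QT) : qFree ws w (qSwap zs a b X) <-> qFree ws (sw zs a b ws w) X.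
Proof.
  rewrite <- (proj1 qFree_swap_gen X zs a b ws (sw zs a b ws w)). rewrite sw_invol. tauto.
Qed.
Lemma qFreeAbs_swap zs a b ws w (A : QA) : qFreeAbs ws w (qSwapAbs zs a b A) <-> qFreeAbs ws (sw zs a b ws w) A.
Proof.
  rewrite <- (proj2 qFree_swap_gen A zs a b ws (sw zs a b ws w)). rewrite sw_invol. tauto.
Qed.

Fixpoint qRen (pi : varsort -> var -> var) (X : QT) : QT :=
  match X with
  | qVar _ _ _ xs x => qV xs (pi xs x)
  | qOp d inp binp =>
      qOp d (fun i => match inp i with Some X' => Some (qRen pi X') | None => None end)
            (fun i => match binp i with Some A => Some (qRenAbs pi A) | None => None end)
  end
with qRenAbs (pi : varsort -> var -> var) (A : QA) : QA :=
  match A with qAbs xs x X => qAbs xs (pi xs x) (qRen pi X) end.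

Lemma qRen_gen :
  (forall X : QT, (forall zs a b, qSwap zs a b X = qRen (sw zs a b) X) /\
             (forall pi sg, qRen pi (qRen sg X) = qRen (fun ws w => pi ws (sg ws w)) X) /\
             qRen (fun _ w => w) X = X) /\
  (forall A : QA, (forall zs a b, qSwapAbs zs a b A = qRenAbs (sw zs a b) A) /\
             (forall pi sg, qRenAbs pi (qRenAbs sg A) = qRenAbs (fun ws w => pi ws (sg ws w)) A) /\
             qRenAbs (fun _ w => w) A = A).
Proof.
  apply qt_ind_both; intros.
  all: try (repeat split; reflexivity).
  all: try (simpl; repeat split; intros; f_equal; apply functional_extensionality; intro i;
    [destruct (inp i) eqn:E; auto; f_equal; apply (H i _ E)
    |destruct (binp i) eqn:E; auto; f_equal; apply (H0 i _ E)
    |destruct (inp i) eqn:E; auto; f_equal; apply (H i _ E)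
    |destruct (binp i) eqn:E; auto; f_equal; apply (H0 i _ E)
    |destruct (inp i) eqn:E; auto; f_equal; apply (H i _ E)
    |destruct (binp i) eqn:E; auto; f_equal; apply (H0 i _ E)]).
  all: destruct H as [H1 [H2 H3]]; simpl; repeat split; intros; f_equal; auto.
Qed.

Lemma qSwap_Ren zs a b (X : QT) : qSwap zs a b X = qRen (sw zs a b) X.
Proof. apply (proj1 (proj1 qRen_gen X)). Qed.
Lemma qSwapAbs_Ren zs a b (A : QA) : qSwapAbs zs a b A = qRenAbs (sw zs a b) A.
Proof. apply (proj1 (proj2 qRen_gen A)). Qed.
Lemma qRen_comp pi sg (X : QT) : qRen pi (qRen sg X) = qRen (fun ws w => pi ws (sg ws w)) X.
Proof. apply (proj1 (proj2 (proj1 qRen_gen X))). Qed.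
Lemma qRenAbs_comp pi sg (A : QA) : qRenAbs pi (qRenAbs sg A) = qRenAbs (fun ws w => pi ws (sg ws w)) A.
Proof. apply (proj1 (proj2 (proj2 qRen_gen A))). Qed.
Lemma qRen_id (X : QT) : qRen (fun _ w => w) X = X.
Proof. apply (proj2 (proj2 (proj1 qRen_gen X))). Qed.

Lemma qSwap_invol zs a b (X : QT) : qSwap zs a b (qSwap zs a b X) = X.
Proof.
  rewrite !qSwap_Ren, qRen_comp. rewrite <- (qRen_id X) at 2. f_equal.
  apply functional_extensionality; intro; apply functional_extensionality; intro; apply sw_invol.
Qed.
Lemma qSwap_same zs a (X : QT) : qSwap zs a a X = X.
Proof.
  rewrite qSwap_Ren. rewrite <- (qRen_id X) at 2. f_equal.
  apply functional_extensionality; intro; apply functional_extensionality; intro; apply sw_same.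
Qed.
Lemma qSwap2_ext p1 p2 p3 p4 (X : QT) :
  (forall ws w, sw (fst (fst p1)) (snd (fst p1)) (snd p1) ws (sw (fst (fst p2)) (snd (fst p2)) (snd p2) ws w)
             = sw (fst (fst p3)) (snd (fst p3)) (snd p3) ws (sw (fst (fst p4)) (snd (fst p4)) (snd p4) ws w)) ->
  qSwap (fst (fst p1)) (snd (fst p1)) (snd p1) (qSwap (fst (fst p2)) (snd (fst p2)) (snd p2) X)
  = qSwap (fst (fst p3)) (snd (fst p3)) (snd p3) (qSwap (fst (fst p4)) (snd (fst p4)) (snd p4) X).
Proof.
  intros. rewrite !qSwap_Ren, !qRen_comp. f_equal.
  apply functional_extensionality; intro; apply functional_extensionality; intro; apply H.
Qed.

End P1.

Lemma lt_card_inj (A B V : Type) (f : A -> B) :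
  (forall a1 a2, f a1 = f a2 -> a1 = a2) -> lt_card B V -> lt_card A V.
Proof.
  intros Hf [[g Hg] Hn]. split.
  - exists (fun a => g (f a)). intros; apply Hf, Hg; auto.
  - intros [h Hh]. apply Hn. exists (fun v => f (h v)). intros; apply Hh, Hf; auto.
Qed.

Section P2.
Variable var : Type.
Hypothesis Hvar : infinite_regular var.

Definition small_set (S : var -> Prop) := lt_card {x : var | S x} var.

Lemma small_sub (S S' : var -> Prop) : (forall x, S x -> S' x) -> small_set S' -> small_set S.
Proof.
  intros H. apply lt_card_inj with (f := fun p : {x | S x} => exist S' (proj1_sig p) (H _ (proj2_sig p))).
  intros [a1 p1] [a2 p2] E. simpl in E. inversion E; subst. f_equal; apply proof_irrelevance.
Qed.

Lemma small_fresh (S : var -> Prop) : small_set S -> exists x, ~ S x.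
Proof.
  intros [_ Hn]. apply NNPP; intro H. apply Hn.
  exists (fun v => exist S v (NNPP _ (fun h => H (ex_intro _ v h)))).
  intros b1 b2 E. inversion E; auto.
Qed.

Lemma two_dist : exists a b : var, a <> b.
Proof.
  destruct Hvar as [Hi _]. destruct (Hi nil) as [a _]. destruct (Hi (a :: nil)) as [b Hb].
  exists a, b. intro; subst; apply Hb; simpl; auto.
Qed.
Lemma three_dist : exists a b c : var, a <> b /\ a <> c /\ b <> c.
Proof.
  destruct Hvar as [Hi _]. destruct (Hi nil) as [a _]. destruct (Hi (a :: nil)) as [b Hb].
  destruct (Hi (a :: b :: nil)) as [c Hc].
  exists a, b, c. simpl in *. repeat split; intro; subst; tauto.
Qed.

Lemma lt_bool : lt_card bool var.
Proof.
  destruct two_dist as [a [b Hab]]. split.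
  - exists (fun t : bool => if t then a else b). intros [] []; auto; intro; congruence.
  - intros [g Hg]. destruct three_dist as [x [y [z [H1 [H2 H3]]]]].
    destruct (g x) eqn:E1, (g y) eqn:E2, (g z) eqn:E3;
      first [ apply H1; apply Hg; congruence | apply H2; apply Hg; congruence
            | apply H3; apply Hg; congruence ].
Qed.

Lemma small_single (a : var) : small_set (fun x => x = a).
Proof.
  split.
  - exists (@proj1_sig _ _). intros [] [] E; simpl in E; subst; f_equal; apply proof_irrelevance.
  - intros [g Hg]. destruct two_dist as [x [y Hxy]]. apply Hxy, Hg.
    destruct (g x) as [u pu], (g y) as [v pv]. subst. f_equal; apply proof_irrelevance.
Qed.

Lemma small_empty : small_set (fun _ => False).
Proof. destruct two_dist as [a _]. apply small_sub with (S' := fun x => x = a); [tauto|apply small_single]. Qed.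

Lemma small_fam (I : Type) (F : I -> var -> Prop) :
  lt_card I var -> (forall i, small_set (F i)) -> small_set (fun x => exists i, F i x).
Proof. intros; apply (proj2 Hvar); auto. Qed.

Lemma small_union (S1 S2 : var -> Prop) :
  small_set S1 -> small_set S2 -> small_set (fun x => S1 x \/ S2 x).
Proof.
  intros. apply small_sub with (S' := fun x => exists b : bool, (if b then S1 else S2) x).
  - intros x [h|h]; [exists true|exists false]; auto.
  - apply small_fam. apply lt_bool. intros []; auto.
Qed.

Lemma small_add (S : var -> Prop) a : small_set S -> small_set (fun x => S x \/ x = a).
Proof. intros; apply small_union; auto; apply small_single. Qed.

Lemma small_preim (S : var -> Prop) (f : var -> var) :
  (forall x y, f x = f y -> x = y) -> small_set S -> small_set (fun x => S (f x)).
Proof.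
  intros Hf. apply lt_card_inj with (f := fun p : {x | S (f x)} => exist S (f (proj1_sig p)) (proj2_sig p)).
  intros [a1 p1] [a2 p2] E. simpl in E. inversion E. apply Hf in H0. subst. f_equal; apply proof_irrelevance.
Qed.

Lemma small_inp (I B C : Type) (inp : input I B) (inp' : input I C) :
  (forall i, inp i = None <-> inp' i = None) -> small var inp -> small var inp'.
Proof.
  intros H. unfold small. apply lt_card_inj with
    (f := fun p : dom inp' => exist (fun i => inp i <> None) (proj1_sig p)
             (fun e => proj2_sig p (proj1 (H _) e))).
  intros [a1 p1] [a2 p2] E. simpl in E. inversion E; subst. f_equal; apply proof_irrelevance.
Qed.

End P2.

Section P3.
Variables var varsort index bindex opsym : Type.
Hypothesis Hvar : infinite_regular var.
Notation QT := (qterm var varsort index bindex opsym).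
Notation QA := (qabs var varsort index bindex opsym).
Notation qV := (@qVar var varsort index bindex opsym).
Local Notation sw := (@swapv var varsort).

Definition swp (p : varsort * var * var) (X : QT) := qSwap (fst (fst p)) (snd (fst p)) (snd p) X.
Definition swpA (p : varsort * var * var) (A : QA) := qSwapAbs (fst (fst p)) (snd (fst p)) (snd p) A.
Definition qSwaps (l : list (varsort * var * var)) (X : QT) := fold_right swp X l.
Definition qSwapsA (l : list (varsort * var * var)) (A : QA) := fold_right swpA A l.

Lemma qSwaps_app l1 l2 X : qSwaps (l1 ++ l2) X = qSwaps l1 (qSwaps l2 X).
Proof. unfold qSwaps; apply fold_right_app. Qed.
Lemma qSwapsA_app l1 l2 A : qSwapsA (l1 ++ l2) A = qSwapsA l1 (qSwapsA l2 A).
Proof. unfold qSwapsA; apply fold_right_app. Qed.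

Lemma qSwaps_Var l xs x : exists x', qSwaps l (qV xs x) = qV xs x'.
Proof. induction l; simpl. exists x; reflexivity. destruct IHl as [x' E]. unfold qSwaps in *. simpl. rewrite E.
  unfold swp. simpl. eexists; reflexivity. Qed.

Lemma qSwaps_Op l d inp binp : qSwaps l (qOp d inp binp) =
  qOp d (fun i => match inp i with Some X => Some (qSwaps l X) | None => None end)
        (fun i => match binp i with Some A => Some (qSwapsA l A) | None => None end).
Proof.
  induction l; simpl.
  - f_equal; apply functional_extensionality; intro i; [destruct (inp i)|destruct (binp i)]; auto.
  - unfold qSwaps in *. simpl. rewrite IHl. unfold swp at 1. simpl. f_equal; apply functional_extensionality; intro i;
      [destruct (inp i)|destruct (binp i)]; auto.
Qed.

Lemma qSwapsA_Abs l xs x X : exists x', qSwapsA l (qAbs xs x X) = qAbs xs x' (qSwaps l X).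
Proof.
  induction l; simpl. exists x; reflexivity. destruct IHl as [x' E]. unfold qSwapsA in *. simpl. rewrite E.
  unfold swpA. simpl. eexists; reflexivity.
Qed.

Lemma qt_ind_sw (P : QT -> Prop) (Q : QA -> Prop) :
  (forall xs x, P (qV xs x)) ->
  (forall d inp binp,
    (forall i X, inp i = Some X -> forall l, P (qSwaps l X)) ->
    (forall i A, binp i = Some A -> forall l, Q (qSwapsA l A)) ->
    P (qOp d inp binp)) ->
  (forall xs x X, (forall l, P (qSwaps l X)) -> Q (qAbs xs x X)) ->
  (forall X, P X) /\ (forall A, Q A).
Proof.
  intros HV HO HA.
  assert (H : (forall X, forall l, P (qSwaps l X)) /\ (forall A, forall l, Q (qSwapsA l A))).
  { apply qt_ind_both; intros.
    - destruct (qSwaps_Var l xs x) as [x' E]; rewrite E; auto.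
    - rewrite qSwaps_Op. apply HO.
      + intros i X E l'. destruct (inp i) eqn:E'; [|discriminate]. inversion E; subst.
        rewrite <- qSwaps_app. apply (H i _ E').
      + intros i X E l'. destruct (binp i) eqn:E'; [|discriminate]. inversion E; subst.
        rewrite <- qSwapsA_app. apply (H0 i _ E').
    - destruct (qSwapsA_Abs l xs x X) as [x' E]; rewrite E. apply HA. intro l'.
      rewrite <- qSwaps_app; auto. }
  split; intros; [apply (proj1 H X nil) | apply (proj2 H A nil)].
Qed.

Lemma small_map (I B C : Type) (inp : input I B) (f : B -> C) :
  small var (fun i => match inp i with Some x => Some (f x) | None => None end) <-> small var inp.
Proof.
  split; apply small_inp; intro i; destruct (inp i); simpl; split; intro; congruence.
Qed.

Lemma qGood_swap_gen :
  (forall X : QT, forall zs a b, qGood (qSwap zs a b X) <-> qGood X) /\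
  (forall A : QA, forall zs a b, qGoodAbs (qSwapAbs zs a b A) <-> qGoodAbs A).
Proof.
  apply qt_ind_both; intros; simpl; [tauto| |rewrite H; tauto].
  split; intros [H1 [H2 [H3 H4]]]; refine (conj _ (conj _ (conj _ _))).
  all: try (rewrite small_map in *; assumption).
  all: intro i.
  all: try (specialize (H3 i); destruct (inp i) eqn:E; auto; apply (H i _ E zs a b); auto; fail).
  all: try (specialize (H4 i); destruct (binp i) eqn:E; auto; apply (H0 i _ E zs a b); auto; fail).
Qed.

Lemma qGood_swap zs a b (X : QT) : qGood (qSwap zs a b X) <-> qGood X.
Proof. apply (proj1 qGood_swap_gen). Qed.
Lemma qGoodAbs_swap zs a b (A : QA) : qGoodAbs (qSwapAbs zs a b A) <-> qGoodAbs A.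
Proof. apply (proj2 qGood_swap_gen). Qed.

Lemma FV_small_gen :
  (forall X : QT, qGood X -> forall ws, small_set (fun z => qFree ws z X)) /\
  (forall A : QA, qGoodAbs A -> forall ws, small_set (fun z => qFreeAbs ws z A)).
Proof.
  apply qt_ind_both; intros; simpl in *.
  - apply small_sub with (S' := fun z => z = x). intros z E; inversion E; auto. apply small_single; auto.
  - destruct H1 as [H1 [H2 [H3 H4]]].
    apply small_sub with (S' := fun z =>
      (exists i : dom inp, match inp (proj1_sig i) with Some X => qFree ws z X | None => False end) \/
      (exists i : dom binp, match binp (proj1_sig i) with Some X => qFreeAbs ws z X | None => False end)).
    + intros z [[i Hi]|[i Hi]].
      * left. destruct (inp i) eqn:E; [|contradiction]. 
        assert (Hn : inp i <> None) by congruence. exists (exist _ i Hn).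
        simpl. rewrite E; auto.
      * right. destruct (binp i) eqn:E; [|contradiction].
        assert (Hn : binp i <> None) by congruence. exists (exist _ i Hn).
        simpl. rewrite E; auto.
    + apply small_union; auto; apply small_fam; auto.
      * intros [i Hi]; simpl. specialize (H3 i). destruct (inp i) eqn:E.
        apply (H i _ E); auto. apply small_empty; auto.
      * intros [i Hi]; simpl. specialize (H4 i). destruct (binp i) eqn:E.
        apply (H0 i _ E); auto. apply small_empty; auto.
  - apply small_sub with (S' := fun z => qFree ws z X). tauto. auto.
Qed.

Lemma FV_small (X : QT) ws : qGood X -> small_set (fun z => qFree ws z X).
Proof. intros; apply (proj1 FV_small_gen); auto. Qed.
Lemma FVA_small (A : QA) ws : qGoodAbs A -> small_set (fun z => qFreeAbs ws z A).
Proof. intros; apply (proj2 FV_small_gen); auto. Qed.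

End P3.

Lemma sw_perm3 (var varsort : Type) (xs : varsort) (x y z : var) :
  x <> y -> z <> x -> z <> y ->
  forall ws w, swapv xs z x ws (swapv xs y x ws w) = swapv xs y x ws (swapv xs z y ws w).
Proof.
  intros. unfold swapv, eqdec.
  repeat (destruct excluded_middle_informative; simpl); try congruence;
  repeat match goal with H : (_,_) = (_,_) |- _ => inversion H; clear H; subst end; congruence.
Qed.

Section P4.
Variables var varsort index bindex opsym : Type.
Hypothesis Hvar : infinite_regular var.
Notation QT := (qterm var varsort index bindex opsym).
Notation QA := (qabs var varsort index bindex opsym).
Notation qV := (@qVar var varsort index bindex opsym).
Local Notation sw := (@swapv var varsort).
Variables (TT AA : Type)
  (VAR : varsort -> var -> TT)
  (OP : opsym -> input index TT -> input bindex AA -> TT)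
  (ABS : varsort -> var -> TT -> AA)
  (FRESH : varsort -> var -> TT -> Prop)
  (FRESHABS : varsort -> var -> AA -> Prop)
  (substT : TT -> TT -> var -> varsort -> TT)
  (substA : AA -> TT -> var -> varsort -> AA).
Hypothesis HM : FSModel VAR OP ABS FRESH FRESHABS substT substA.

Fixpoint qf (X : QT) : TT :=
  match X with
  | qVar _ _ _ xs x => VAR xs x
  | qOp d inp binp =>
      OP d (fun i => match inp i with Some X' => Some (qf X') | None => None end)
           (fun i => match binp i with Some A => Some (qfA A) | None => None end)
  end
with qfA (A : QA) : AA :=
  match A with qAbs xs x X => ABS xs x (qf X) end.

Lemma fresh_gen :
  (forall X : QT, qGood X -> forall ys y, ~ qFree ys y X -> FRESH ys y (qf X)) /\
  (forall A : QA, qGoodAbs A -> forall ys y, ~ qFreeAbs ys y A -> FRESHABS ys y (qfA A)).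
Proof.
  apply qt_ind_both; intros; simpl in *.
  - apply (F1 HM). intro E; apply H0; inversion E; auto.
  - destruct H1 as [H1 [H4 [H5 H6]]]. apply (F2 HM).
    + apply small_map; auto.
    + apply small_map; auto.
    + intros i a E. specialize (H5 i). destruct (inp i) eqn:E'; inversion E; subst.
      apply (H i _ E'); auto. intro; apply H2; left; exists i; rewrite E'; auto.
    + intros i a E. specialize (H6 i). destruct (binp i) eqn:E'; inversion E; subst.
      apply (H0 i _ E'); auto. intro; apply H2; right; exists i; rewrite E'; auto.
  - apply (F3 HM). destruct (classic ((ys,y) = (xs,x))); auto. right. apply H; auto.
Qed.

Lemma qf_fresh (X : QT) ys y : qGood X -> ~ qFree ys y X -> FRESH ys y (qf X).
Proof. intros; apply (proj1 fresh_gen); auto. Qed.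
Lemma qfA_fresh (A : QA) ys y : qGoodAbs A -> ~ qFreeAbs ys y A -> FRESHABS ys y (qfA A).
Proof. intros; apply (proj2 fresh_gen); auto. Qed.

Lemma pick_fresh (S : var -> Prop) : small_set S -> exists z, ~ S z.
Proof. apply small_fresh. Qed.
Lemma sU (S1 S2 : var -> Prop) : small_set S1 -> small_set S2 -> small_set (fun x => S1 x \/ S2 x).
Proof. apply small_union; auto. Qed.
Lemma s1 (a : var) : small_set (fun x => x = a).
Proof. apply small_single; auto. Qed.
Lemma s0 : small_set (fun _ : var => False).
Proof. apply small_empty; auto. Qed.
Lemma sFV (X : QT) ws : qGood X -> small_set (fun z => qFree ws z X).
Proof. apply FV_small; auto. Qed.
Lemma sFVA (A : QA) ws : qGoodAbs A -> small_set (fun z => qFreeAbs ws z A).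
Proof. apply FVA_small; auto. Qed.
Ltac smalltac := repeat first [ apply sU | apply s1 | apply s0 | (apply sFV; assumption) | (apply sFVA; assumption) ].

Definition BC (X : QT) :=
  qGood X ->
  (forall ks k ys y, ~ qFree ys y X -> substT (qf X) (VAR ks k) y ys = qf X) /\
  (forall xs y x, ~ qFree xs y X -> qf (qSwap xs y x X) = substT (qf X) (VAR xs y) x xs).
Definition BCA (A : QA) :=
  qGoodAbs A ->
  (forall ks k ys y, ~ qFreeAbs ys y A -> substA (qfA A) (VAR ks k) y ys = qfA A) /\
  (forall xs y x, ~ qFreeAbs xs y A -> qfA (qSwapAbs xs y x A) = substA (qfA A) (VAR xs y) x xs).

Lemma BC_gen : (forall X, BC X) /\ (forall A, BCA A).
Proof.
  apply qt_ind_sw; unfold BC, BCA; intros.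
  - split; intros.
    + apply (S1b HM). intro E; apply H0; simpl; auto.
    + simpl. destruct (sw_cases xs0 y x0 xs x) as [[E1 E2]|[[E1 E2]|[E0 [E1 E2]]]]; rewrite E2.
      * exfalso; apply H0; simpl; auto.
      * inversion E1; subst. rewrite (S1a HM); auto.
      * rewrite (S1b HM); auto.
  - destruct H1 as [H1 [H2 [H3 H4]]]. split; intros.
    + simpl. rewrite (S2 HM) by (apply small_map; auto). f_equal; apply functional_extensionality; intro i.
      * unfold lift. specialize (H3 i). destruct (inp i) eqn:E; simpl; auto. f_equal.
        apply (proj1 (H i _ E nil H3)). intro; apply H5; left; exists i; rewrite E; auto.
      * unfold lift. specialize (H4 i). destruct (binp i) eqn:E; simpl; auto. f_equal.
        apply (proj1 (H0 i _ E nil H4)). intro; apply H5; right; exists i; rewrite E; auto.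
    + simpl. rewrite (S2 HM) by (apply small_map; auto). f_equal; apply functional_extensionality; intro i.
      * unfold lift. specialize (H3 i). destruct (inp i) eqn:E; simpl; auto. f_equal.
        apply (proj2 (H i _ E nil H3)). intro; apply H5; left; exists i; rewrite E; auto.
      * unfold lift. specialize (H4 i). destruct (binp i) eqn:E; simpl; auto. f_equal.
        apply (proj2 (H0 i _ E nil H4)). intro; apply H5; right; exists i; rewrite E; auto.
  - simpl in H0. rename xs into ws, x into w, X into Z.
    assert (IH0 := H nil H0). simpl in IH0. destruct IH0 as [IC IB].
    assert (IHs : forall zs a b, BC (qSwap zs a b Z)) by (intros zs a b; exact (H ((zs,a,b) :: nil))).
    assert (REN : forall z, ~ qFree ws z Z -> ABS ws w (qf Z) = ABS ws z (qf (qSwap ws z w Z))).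
    { intros z Hz. rewrite (R2 HM) with (y := z) by (apply qf_fresh; auto). rewrite IB; auto. }
    assert (CA : forall ks k ys y, ~ qFreeAbs ys y (qAbs ws w Z) ->
                 substA (ABS ws w (qf Z)) (VAR ks k) y ys = ABS ws w (qf Z)).
    { intros ks k ys y Hy.
      destruct (pick_fresh (S := fun z => qFree ws z Z \/ z = w \/ z = y \/ z = k))
        as [z Hz]; [smalltac|].
      rewrite (REN z) by tauto. rewrite (S3 HM) by (try (apply (F1 HM)); intro E; inversion E; tauto).
      f_equal. apply (proj1 (IHs ws z w (proj2 (qGood_swap _ _ _ _) H0))).
      rewrite qFree_swap. destruct (sw_cases ws z w ys y) as [[E1 E2]|[[E1 E2]|[E0 [E1 E2]]]]; rewrite E2.
      + exfalso; apply Hz; right; right; left; inversion E1; auto.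
      + inversion E1; subst. tauto.
      + intro Hf; apply Hy. simpl. split; auto. }
    split; [exact CA|].
    intros xs y x Hy. simpl.
    destruct (classic (y = x)) as [Exy|Nxy].
    { subst. rewrite qSwap_same, sw_same. symmetry. apply CA; auto. }
    destruct (sw_cases xs y x ws w) as [[E1 E2]|[[E1 E2]|[E0 [E1 E2]]]]; rewrite E2.
    + inversion E1; subst ws w.
      destruct (pick_fresh (S := fun z => qFree xs z Z \/ z = x \/ z = y)) as [z Hz]; [smalltac|].
      assert (G1 : qGood (qSwap xs z y Z)) by (apply qGood_swap; auto).
      assert (G2 : qGood (qSwap xs y x Z)) by (apply qGood_swap; auto).
      rewrite (REN z) by tauto.
      rewrite (S3 HM) by (try (apply (F1 HM)); intro E; inversion E; tauto).
      rewrite <- (proj2 (IHs xs z y G1)) by (rewrite qFree_swap, sw_b; tauto).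
      rewrite (R2 HM) with (y := z) by (apply qf_fresh; auto; rewrite qFree_swap, sw_o; [tauto| |]; intro E; inversion E; tauto).
      rewrite <- (proj2 (IHs xs y x G2)) by (rewrite qFree_swap, sw_o; [tauto| |]; intro E; inversion E; tauto).
      f_equal. f_equal.
      apply (qSwap2_ext (xs,z,x) (xs,y,x) (xs,y,x) (xs,z,y)). simpl.
      apply sw_perm3; intro; subst; tauto.
    + inversion E1; subst ws w.
      rewrite CA by (simpl; tauto).
      rewrite (R2 HM) with (x := x) (y := y) (X := qf Z) by (apply qf_fresh; auto; intro Hf; apply Hy; simpl; split; auto; intro E; inversion E; auto).
      rewrite IB; auto. intro Hf; apply Hy; simpl; split; auto; intro E; inversion E; auto.
    + rewrite (S3 HM) by (auto; apply (F1 HM); auto).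
      rewrite IB; auto. intro Hf; apply Hy; simpl; split; auto.
Qed.

End P4.

Lemma eps_ext (A : Type) (h h' : inhabited A) (P P' : A -> Prop) :
  (forall z, P z <-> P' z) -> epsilon h P = epsilon h' P'.
Proof.
  intros. assert (P = P') by (apply functional_extensionality; intro; apply propositional_extensionality; auto).
  subst. f_equal. apply proof_irrelevance.
Qed.

Section P5.
Variables var varsort index bindex opsym : Type.
Notation QT := (qterm var varsort index bindex opsym).
Notation QA := (qabs var varsort index bindex opsym).
Notation qV := (@qVar var varsort index bindex opsym).
Local Notation sw := (@swapv var varsort).
Notation Rho := (varsort -> var -> QT).

Definition admz (rho : Rho) xs x (X : QT) (z : var) :=
  forall ws w, qFreeAbs ws w (qAbs xs x X) -> ~ qFree xs z (rho ws w).
Definition pickz (rho : Rho) xs x (X : QT) : var := epsilon (inhabits x) (admz rho xs x X).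

Lemma qPsubstAbs_eq (rho : Rho) xs x X :
  qPsubstAbs rho (qAbs xs x X) = qAbs xs (pickz rho xs x X) (qPsubst (upd rho xs x (qV xs (pickz rho xs x X))) X).
Proof. reflexivity. Qed.

Lemma qPsubst_Op (rho : Rho) d inp binp :
  qPsubst rho (qOp d inp binp) =
  qOp d (fun i => match inp i with Some X' => Some (qPsubst rho X') | None => None end)
        (fun i => match binp i with Some A => Some (qPsubstAbs rho A) | None => None end).
Proof. reflexivity. Qed.

Lemma pickz_adm (rho : Rho) xs x X : (exists z, admz rho xs x X z) -> admz rho xs x X (pickz rho xs x X).
Proof. intros. unfold pickz. apply epsilon_spec; auto. Qed.

Lemma upd_eq (rho : Rho) xs x Z : upd rho xs x Z xs x = Z.
Proof. unfold upd. rewrite eqdec_t; auto. Qed.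
Lemma upd_neq (rho : Rho) xs x Z ws w : (ws, w) <> (xs, x) -> upd rho xs x Z ws w = rho ws w.
Proof. intros; unfold upd. rewrite eqdec_f; auto. Qed.

Lemma PA_gen :
  (forall X : QT, forall rho rho' : Rho, (forall ws w, qFree ws w X -> rho ws w = rho' ws w) ->
     qPsubst rho X = qPsubst rho' X) /\
  (forall A : QA, forall rho rho' : Rho, (forall ws w, qFreeAbs ws w A -> rho ws w = rho' ws w) ->
     qPsubstAbs rho A = qPsubstAbs rho' A).
Proof.
  apply qt_ind_both; intros.
  - simpl. apply H; simpl; auto.
  - rewrite !qPsubst_Op. f_equal; apply functional_extensionality; intro i.
    + destruct (inp i) eqn:E; auto. f_equal. apply (H i _ E). intros; apply H1; simpl; left; exists i; rewrite E; auto.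
    + destruct (binp i) eqn:E; auto. f_equal. apply (H0 i _ E). intros; apply H1; simpl; right; exists i; rewrite E; auto.
  - rewrite !qPsubstAbs_eq.
    assert (E : pickz rho xs x X = pickz rho' xs x X).
    { unfold pickz. apply eps_ext. intro z. unfold admz. split; intros Hz ws w Hw; rewrite ?H0 in *; auto.
      rewrite <- H0; auto. }
    rewrite E. f_equal. apply H. intros ws w Hw. destruct (classic ((ws,w) = (xs,x))) as [e|n].
    + inversion e; subst. rewrite !upd_eq; auto.
    + rewrite !upd_neq; auto. apply H0. simpl. split; auto.
Qed.

Lemma PA (X : QT) (rho rho' : Rho) : (forall ws w, qFree ws w X -> rho ws w = rho' ws w) ->
  qPsubst rho X = qPsubst rho' X.
Proof. apply (proj1 PA_gen). Qed.
Lemma PAA (A : QA) (rho rho' : Rho) : (forall ws w, qFreeAbs ws w A -> rho ws w = rho' ws w) ->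
  qPsubstAbs rho A = qPsubstAbs rho' A.
Proof. apply (proj2 PA_gen). Qed.

Lemma PS_gen :
  (forall X : QT, forall (rho : Rho) zs a b,
     qPsubst rho (qSwap zs a b X) = qPsubst (fun ws w => rho ws (sw zs a b ws w)) X) /\
  (forall A : QA, forall (rho : Rho) zs a b,
     qPsubstAbs rho (qSwapAbs zs a b A) = qPsubstAbs (fun ws w => rho ws (sw zs a b ws w)) A).
Proof.
  apply qt_ind_both; intros.
  - reflexivity.
  - simpl qSwap. rewrite !qPsubst_Op. f_equal; apply functional_extensionality; intro i.
    + destruct (inp i) eqn:E; auto. f_equal. apply (H i _ E).
    + destruct (binp i) eqn:E; auto. f_equal. apply (H0 i _ E).
  - simpl qSwapAbs. rewrite !qPsubstAbs_eq.
    assert (E : pickz rho xs (sw zs a b xs x) (qSwap zs a b X) =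
                pickz (fun ws w => rho ws (sw zs a b ws w)) xs x X).
    { unfold pickz. apply eps_ext. intro z. unfold admz. split; intros Hz ws w Hw.
      - apply Hz. change (qAbs xs (sw zs a b xs x) (qSwap zs a b X)) with (qSwapAbs zs a b (qAbs xs x X)).
        rewrite qFreeAbs_swap, sw_invol. auto.
      - change (qAbs xs (sw zs a b xs x) (qSwap zs a b X)) with (qSwapAbs zs a b (qAbs xs x X)) in Hw.
        rewrite qFreeAbs_swap in Hw. specialize (Hz _ _ Hw). rewrite sw_invol in Hz. auto. }
    rewrite E. f_equal. rewrite H. f_equal.
    apply functional_extensionality; intro ws; apply functional_extensionality; intro w.
    destruct (classic ((ws,w) = (xs,x))) as [e|n].
    + inversion e; subst. rewrite !upd_eq; auto.
    + rewrite !upd_neq; auto. intro e. apply sw_pair_inj in e. auto.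
Qed.

Lemma PS (X : QT) (rho : Rho) zs a b :
  qPsubst rho (qSwap zs a b X) = qPsubst (fun ws w => rho ws (sw zs a b ws w)) X.
Proof. apply (proj1 PS_gen). Qed.

Lemma PF_gen :
  (forall X : QT, forall (rho : Rho) ns n, qFree ns n (qPsubst rho X) ->
     exists ws w, qFree ws w X /\ qFree ns n (rho ws w)) /\
  (forall A : QA, forall (rho : Rho) ns n, qFreeAbs ns n (qPsubstAbs rho A) ->
     exists ws w, qFreeAbs ws w A /\ qFree ns n (rho ws w)).
Proof.
  apply qt_ind_both; intros.
  - simpl in H. exists xs, x; simpl; auto.
  - rewrite qPsubst_Op in H1. simpl in H1. destruct H1 as [[i Hi]|[i Hi]].
    + destruct (inp i) eqn:E; [|contradiction]. destruct (H i _ E _ _ _ Hi) as [ws [w [H2 H3]]].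
      exists ws, w; split; auto. simpl; left; exists i; rewrite E; auto.
    + destruct (binp i) eqn:E; [|contradiction]. destruct (H0 i _ E _ _ _ Hi) as [ws [w [H2 H3]]].
      exists ws, w; split; auto. simpl; right; exists i; rewrite E; auto.
  - rewrite qPsubstAbs_eq in H0. simpl in H0. destruct H0 as [H1 H2].
    destruct (H _ _ _ H2) as [ws [w [H3 H4]]].
    destruct (classic ((ws,w) = (xs,x))) as [e|ne].
    + inversion e; subst. rewrite upd_eq in H4. simpl in H4. congruence.
    + rewrite upd_neq in H4; auto. exists ws, w; simpl; auto.
Qed.

Lemma PF (X : QT) (rho : Rho) ns n : qFree ns n (qPsubst rho X) ->
     exists ws w, qFree ws w X /\ qFree ns n (rho ws w).
Proof. apply (proj1 PF_gen). Qed.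
Lemma PFA (A : QA) (rho : Rho) ns n : qFreeAbs ns n (qPsubstAbs rho A) ->
     exists ws w, qFreeAbs ws w A /\ qFree ns n (rho ws w).
Proof. apply (proj2 PF_gen). Qed.

Lemma PG_gen :
  (forall X : QT, forall (rho : Rho), qGood X -> (forall ws w, qFree ws w X -> qGood (rho ws w)) ->
     qGood (qPsubst rho X)) /\
  (forall A : QA, forall (rho : Rho), qGoodAbs A -> (forall ws w, qFreeAbs ws w A -> qGood (rho ws w)) ->
     qGoodAbs (qPsubstAbs rho A)).
Proof.
  apply qt_ind_both; intros.
  - apply H0; simpl; auto.
  - rewrite qPsubst_Op. simpl in H1 |- *. destruct H1 as [H3 [H4 [H5 H6]]].
    refine (conj _ (conj _ (conj _ _))).
    + apply small_map; auto.
    + apply small_map; auto.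
    + intro i. specialize (H5 i). destruct (inp i) eqn:E; auto. apply (H i _ E); auto.
      intros; apply H2; simpl; left; exists i; rewrite E; auto.
    + intro i. specialize (H6 i). destruct (binp i) eqn:E; auto. apply (H0 i _ E); auto.
      intros; apply H2; simpl; right; exists i; rewrite E; auto.
  - rewrite qPsubstAbs_eq. simpl in *. apply H; auto. intros ws w Hw.
    destruct (classic ((ws,w) = (xs,x))) as [e|ne].
    + inversion e; subst. rewrite upd_eq. simpl; auto.
    + rewrite upd_neq by auto. apply H1. simpl; auto.
Qed.

Lemma PG (X : QT) (rho : Rho) : qGood X -> (forall ws w, qFree ws w X -> qGood (rho ws w)) ->
     qGood (qPsubst rho X).
Proof. apply (proj1 PG_gen). Qed.
Lemma PGA (A : QA) (rho : Rho) : qGoodAbs A -> (forall ws w, qFreeAbs ws w A -> qGood (rho ws w)) ->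
     qGoodAbs (qPsubstAbs rho A).
Proof. apply (proj2 PG_gen). Qed.

End P5.

Section P6.
Variables var varsort index bindex opsym : Type.
Hypothesis Hvar : infinite_regular var.
Notation QT := (qterm var varsort index bindex opsym).
Notation QA := (qabs var varsort index bindex opsym).
Notation qV := (@qVar var varsort index bindex opsym).
Local Notation sw := (@swapv var varsort).
Notation Rho := (varsort -> var -> QT).
Variables (TT AA : Type)
  (VAR : varsort -> var -> TT)
  (OP : opsym -> input index TT -> input bindex AA -> TT)
  (ABS : varsort -> var -> TT -> AA)
  (FRESH : varsort -> var -> TT -> Prop)
  (FRESHABS : varsort -> var -> AA -> Prop)
  (substT : TT -> TT -> var -> varsort -> TT)
  (substA : AA -> TT -> var -> varsort -> AA).
Hypothesis HM : FSModel VAR OP ABS FRESH FRESHABS substT substA.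
Notation qF := (qf VAR OP ABS).
Notation qFA := (qfA VAR OP ABS).

Lemma tU (S1 S2 : var -> Prop) : small_set S1 -> small_set S2 -> small_set (fun x => S1 x \/ S2 x).
Proof. apply small_union; auto. Qed.
Lemma t1 (a : var) : small_set (fun x => x = a).
Proof. apply small_single; auto. Qed.
Lemma tFV (X : QT) ws : qGood X -> small_set (fun z => qFree ws z X).
Proof. apply FV_small; auto. Qed.
Lemma tFVA (A : QA) ws : qGoodAbs A -> small_set (fun z => qFreeAbs ws z A).
Proof. apply FVA_small; auto. Qed.
Ltac smalltac := repeat first [ apply tU | apply t1 | (apply tFV; assumption) | (apply tFVA; assumption) | assumption ].

Lemma qF_swap (X : QT) xs y x : qGood X -> ~ qFree xs y X ->
  qF (qSwap xs y x X) = substT (qF X) (VAR xs y) x xs.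
Proof. intros. apply (proj2 (proj1 (BC_gen Hvar HM) X H)); auto. Qed.
Lemma qF_subst_id (X : QT) ks k ys y : qGood X -> ~ qFree ys y X ->
  substT (qF X) (VAR ks k) y ys = qF X.
Proof. intros. apply (proj1 (proj1 (BC_gen Hvar HM) X H)); auto. Qed.
Lemma qFA_subst_id (A : QA) ks k ys y : qGoodAbs A -> ~ qFreeAbs ys y A ->
  substA (qFA A) (VAR ks k) y ys = qFA A.
Proof. intros. apply (proj1 (proj2 (BC_gen Hvar HM) A H)); auto. Qed.
Lemma qF_swap_id (X : QT) xs c a : qGood X -> ~ qFree xs c X -> ~ qFree xs a X ->
  qF (qSwap xs c a X) = qF X.
Proof. intros. rewrite qF_swap; auto. apply qF_subst_id; auto. Qed.

Lemma qFree_swap_id (X : QT) xs c a ns n : ~ qFree xs c X -> ~ qFree xs a X ->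
  (qFree ns n (qSwap xs c a X) <-> qFree ns n X).
Proof.
  intros. rewrite qFree_swap. destruct (sw_cases xs c a ns n) as [[E1 E2]|[[E1 E2]|[E0 [E1 E2]]]]; rewrite E2.
  - inversion E1; subst. tauto.
  - inversion E1; subst. tauto.
  - tauto.
Qed.

Lemma CG_gen :
  (forall X : QT, forall rho rho' : Rho,
    (forall ws w, qFree ws w X -> qF (rho ws w) = qF (rho' ws w) /\
        (forall ns n, qFree ns n (rho ws w) <-> qFree ns n (rho' ws w))) ->
    qF (qPsubst rho X) = qF (qPsubst rho' X)) /\
  (forall A : QA, forall rho rho' : Rho,
    (forall ws w, qFreeAbs ws w A -> qF (rho ws w) = qF (rho' ws w) /\
        (forall ns n, qFree ns n (rho ws w) <-> qFree ns n (rho' ws w))) ->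
    qFA (qPsubstAbs rho A) = qFA (qPsubstAbs rho' A)).
Proof.
  apply qt_ind_both; intros.
  - simpl. apply H; simpl; auto.
  - rewrite !qPsubst_Op. simpl. f_equal; apply functional_extensionality; intro i.
    + destruct (inp i) eqn:E; auto. f_equal. apply (H i _ E). intros; apply H1; simpl; left; exists i; rewrite E; auto.
    + destruct (binp i) eqn:E; auto. f_equal. apply (H0 i _ E). intros; apply H1; simpl; right; exists i; rewrite E; auto.
  - rewrite !qPsubstAbs_eq.
    assert (E : pickz rho xs x X = pickz rho' xs x X).
    { unfold pickz. apply eps_ext. intro z. unfold admz. split; intros Hz ws w Hw.
      - rewrite <- (proj2 (H0 _ _ Hw)). auto.
      - rewrite (proj2 (H0 _ _ Hw)). auto. }
    rewrite E. simpl. f_equal. apply H. intros ws w Hw. destruct (classic ((ws,w) = (xs,x))) as [e|n].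
    + inversion e; subst. rewrite !upd_eq; split; tauto.
    + rewrite !upd_neq by auto. apply H0. simpl. split; auto.
Qed.

Lemma CG (X : QT) (rho rho' : Rho) :
    (forall ws w, qFree ws w X -> qF (rho ws w) = qF (rho' ws w) /\
        (forall ns n, qFree ns n (rho ws w) <-> qFree ns n (rho' ws w))) ->
    qF (qPsubst rho X) = qF (qPsubst rho' X).
Proof. apply (proj1 CG_gen). Qed.

Definition RS (rho : Rho) (F : varsort -> var -> Prop) zs z :=
  exists ws w, F ws w /\ qFree zs z (rho ws w).
Definition AdmF (rho : Rho) F := forall zs, small_set (RS rho F zs).
Definition GoodR (rho : Rho) (F : varsort -> var -> Prop) := forall ws w, F ws w -> qGood (rho ws w).
Definition FVT (X : QT) := fun ws w => qFree ws w X.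
Definition FVA (A : QA) := fun ws w => qFreeAbs ws w A.

Lemma AdmF_sub (rho : Rho) F G : (forall ws w, F ws w -> G ws w) -> AdmF rho G -> AdmF rho F.
Proof.
  intros H HG zs. apply small_sub with (S' := RS rho G zs); auto.
  intros z [ws [w [H1 H2]]]; exists ws, w; auto.
Qed.

Lemma AdmF_upd (rho : Rho) xs x X0 d :
  AdmF rho (FVA (qAbs xs x X0)) -> AdmF (upd rho xs x (qV xs d)) (FVT X0).
Proof.
  intros H zs. apply small_sub with (S' := fun z => RS rho (FVA (qAbs xs x X0)) zs z \/ z = d).
  - intros z [ws [w [H1 H2]]]. destruct (classic ((ws,w) = (xs,x))) as [e|n].
    + inversion e; subst. rewrite upd_eq in H2. simpl in H2. inversion H2; auto.
    + rewrite upd_neq in H2 by auto. left. exists ws, w. split; auto. unfold FVA; simpl; auto.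
  - smalltac. apply H.
Qed.

Lemma GoodR_upd (rho : Rho) xs x X0 d :
  GoodR rho (FVA (qAbs xs x X0)) -> GoodR (upd rho xs x (qV xs d)) (FVT X0).
Proof.
  intros H ws w Hw. destruct (classic ((ws,w) = (xs,x))) as [e|n].
  - inversion e; subst. rewrite upd_eq. simpl; auto.
  - rewrite upd_neq by auto. apply H. unfold FVA; simpl; auto.
Qed.

Lemma AdmF_swap (rho : Rho) F zs a b :
  AdmF rho F -> AdmF (fun ws w => qSwap zs a b (rho ws w)) F.
Proof.
  intros H ns. apply small_sub with (S' := fun z => RS rho F ns (sw zs a b ns z)).
  - intros z [ws [w [H1 H2]]]. exists ws, w. split; auto. rewrite qFree_swap in H2; auto.
  - apply small_preim; auto. intros; eapply sw_inj; eauto.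
Qed.

Lemma GoodR_swap (rho : Rho) F zs a b : GoodR rho F -> GoodR (fun ws w => qSwap zs a b (rho ws w)) F.
Proof. intros H ws w Hw. apply qGood_swap. auto. Qed.

Lemma adm_exists (rho : Rho) xs x X0 : AdmF rho (FVA (qAbs xs x X0)) -> exists z, admz rho xs x X0 z.
Proof.
  intros H. destruct (pick_fresh (H xs)) as [z Hz]. exists z. intros ws w Hw Hf. apply Hz.
  exists ws, w; split; auto.
Qed.

(* ---------- fresh-name irrelevance, given swapping lemma for the body ---------- *)
Definition SWT (X : QT) := forall (rho : Rho) zs a b, GoodR rho (FVT X) -> AdmF rho (FVT X) ->
  qF (qSwap zs a b (qPsubst rho X)) = qF (qPsubst (fun ws w => qSwap zs a b (rho ws w)) X).
Definition SWA (A : QA) := forall (rho : Rho) zs a b, GoodR rho (FVA A) -> AdmF rho (FVA A) ->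
  qFA (qSwapAbs zs a b (qPsubstAbs rho A)) = qFA (qPsubstAbs (fun ws w => qSwap zs a b (rho ws w)) A).

Lemma FN1 (X0 : QT) (sigma : Rho) xs x c d :
  qGood X0 -> SWT X0 -> GoodR sigma (FVA (qAbs xs x X0)) -> AdmF sigma (FVA (qAbs xs x X0)) ->
  admz sigma xs x X0 c -> admz sigma xs x X0 d -> c <> d ->
  ABS xs d (qF (qPsubst (upd sigma xs x (qV xs d)) X0)) = ABS xs c (qF (qPsubst (upd sigma xs x (qV xs c)) X0)).
Proof.
  intros G0 SW GR AD Ac Ad Ncd.
  set (Bd := qPsubst (upd sigma xs x (qV xs d)) X0).
  assert (Gd : qGood Bd) by (apply PG; auto; apply GoodR_upd; auto).
  assert (Fc : ~ qFree xs c Bd).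
  { intro Hf. destruct (PF _ _ _ _ Hf) as [ws [w [H1 H2]]].
    destruct (classic ((ws,w) = (xs,x))) as [e|n].
    - inversion e; subst. rewrite upd_eq in H2. simpl in H2. inversion H2; auto.
    - rewrite upd_neq in H2 by auto. apply (Ac ws w); auto. simpl; auto. }
  rewrite (R2 HM) with (x := d) (y := c) (X := qF Bd) by (apply (qf_fresh HM); auto).
  rewrite <- qF_swap by auto. unfold Bd. rewrite SW.
  2: apply GoodR_upd; auto.
  2: apply AdmF_upd; auto.
  f_equal. apply CG. intros ws w Hw. destruct (classic ((ws,w) = (xs,x))) as [e|n].
  - inversion e; subst. rewrite !upd_eq. simpl. rewrite sw_b. split; tauto.
  - rewrite !upd_neq by auto.
    assert (HA : qFreeAbs ws w (qAbs xs x X0)) by (simpl; auto).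
    split.
    + apply qF_swap_id; auto; first [apply (Ac ws w HA) | apply (Ad ws w HA)].
    + intros. apply qFree_swap_id; first [apply (Ac ws w HA) | apply (Ad ws w HA)].
Qed.

Lemma FN (X0 : QT) (sigma : Rho) xs x a b :
  qGood X0 -> SWT X0 -> GoodR sigma (FVA (qAbs xs x X0)) -> AdmF sigma (FVA (qAbs xs x X0)) ->
  admz sigma xs x X0 a -> admz sigma xs x X0 b ->
  ABS xs a (qF (qPsubst (upd sigma xs x (qV xs a)) X0)) = ABS xs b (qF (qPsubst (upd sigma xs x (qV xs b)) X0)).
Proof.
  intros G0 SW GR AD Aa Ab.
  destruct (pick_fresh (S := fun z => RS sigma (FVA (qAbs xs x X0)) xs z \/ z = a \/ z = b)) as [c Hc].
  { smalltac. apply AD. }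
  assert (Ac : admz sigma xs x X0 c).
  { intros ws w Hw Hf. apply Hc. left. exists ws, w. auto. }
  rewrite (FN1 G0 SW GR AD Ac Aa) by (intro; subst; tauto).
  rewrite (FN1 G0 SW GR AD Ac Ab) by (intro; subst; tauto). reflexivity.
Qed.

Lemma SW_gen : (forall X : QT, qGood X -> SWT X) /\ (forall A : QA, qGoodAbs A -> SWA A).
Proof.
  apply qt_ind_both; unfold SWT, SWA; intros.
  - reflexivity.
  - simpl in H1. destruct H1 as [H5 [H6 [H7 H8]]].
    rewrite !qPsubst_Op. simpl. f_equal; apply functional_extensionality; intro i.
    + specialize (H7 i). destruct (inp i) eqn:E; auto. simpl. f_equal. apply (H i _ E); auto.
      * intros ws w Hw; apply H2; simpl; left; exists i; rewrite E; auto.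
      * apply AdmF_sub with (G := FVT (qOp d inp binp)); auto.
        intros ws w Hw; simpl; left; exists i; rewrite E; auto.
    + specialize (H8 i). destruct (binp i) eqn:E; auto. simpl. f_equal. apply (H0 i _ E); auto.
      * intros ws w Hw; apply H2; simpl; right; exists i; rewrite E; auto.
      * apply AdmF_sub with (G := FVT (qOp d inp binp)); auto.
        intros ws w Hw; simpl; right; exists i; rewrite E; auto.
  - simpl in H0. rename X into X0.
    rewrite !qPsubstAbs_eq. simpl.
    rewrite H; auto.
    2: apply GoodR_upd; auto.
    2: apply AdmF_upd; auto.
    set (sg := fun ws w => qSwap zs a b (rho ws w)).
    assert (EU : (fun ws w => qSwap zs a b (upd rho xs x (qV xs (pickz rho xs x X0)) ws w)) =
                 upd sg xs x (qV xs (sw zs a b xs (pickz rho xs x X0)))).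
    { apply functional_extensionality; intro ws; apply functional_extensionality; intro w.
      destruct (classic ((ws,w) = (xs,x))) as [e|n].
      - inversion e; subst. rewrite !upd_eq. reflexivity.
      - rewrite !upd_neq by auto. reflexivity. }
    rewrite EU. apply FN; auto.
    + exact (H H0).
    + unfold sg. apply GoodR_swap; auto.
    + unfold sg. apply AdmF_swap; auto.
    + intros ws w Hw Hf. unfold sg in Hf. rewrite qFree_swap, sw_invol in Hf.
      apply (pickz_adm (adm_exists H2) Hw Hf).
    + apply pickz_adm. apply adm_exists. unfold sg. apply AdmF_swap; auto.
Qed.

Lemma SWall (X : QT) : qGood X -> SWT X.
Proof. apply (proj1 SW_gen). Qed.


Lemma AdmF_rho0 (Y : QT) ys y F : (forall zs, small_set (fun z => F zs z)) -> qGood Y ->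
  AdmF (upd qV ys y Y) F.
Proof.
  intros HF GY zs. apply small_sub with (S' := fun z => F zs z \/ qFree zs z Y).
  - intros z [ws [w [H1 H2]]]. destruct (classic ((ws,w) = (ys,y))) as [e|n].
    + inversion e; subst. rewrite upd_eq in H2. auto.
    + rewrite upd_neq in H2 by auto. simpl in H2. inversion H2; subst. auto.
  - apply tU; [apply HF | apply tFV; auto].
Qed.

Lemma GoodR_rho0 (Y : QT) ys y F : qGood Y -> GoodR (upd qV ys y Y) F.
Proof.
  intros GY ws w _. destruct (classic ((ws,w) = (ys,y))) as [e|n].
  - inversion e; subst. rewrite upd_eq; auto.
  - rewrite upd_neq by auto. simpl; auto.
Qed.

Definition SP (X : QT) := forall (Y : QT) ys y, qGood X -> qGood Y ->
  qF (qPsubst (upd qV ys y Y) X) = substT (qF X) (qF Y) y ys.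
Definition SPA (A : QA) := forall (Y : QT) ys y, qGoodAbs A -> qGood Y ->
  qFA (qPsubstAbs (upd qV ys y Y) A) = substA (qFA A) (qF Y) y ys.

Lemma S_gen : (forall X, SP X) /\ (forall A, SPA A).
Proof.
  apply qt_ind_sw; unfold SP, SPA; intros.
  - simpl. destruct (classic ((xs,x) = (ys,y))) as [e|n].
    + inversion e; subst. rewrite upd_eq. rewrite (S1a HM); auto.
    + rewrite upd_neq by auto. rewrite (S1b HM); auto.
  - simpl in H1. destruct H1 as [H3 [H4 [H5 H6]]].
    rewrite qPsubst_Op. simpl. rewrite (S2 HM) by (apply small_map; auto).
    f_equal; apply functional_extensionality; intro i; unfold lift.
    + specialize (H5 i). destruct (inp i) eqn:E; auto. simpl. f_equal. apply (H i _ E nil); auto.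
    + specialize (H6 i). destruct (binp i) eqn:E; auto. simpl. f_equal. apply (H0 i _ E nil); auto.
  - simpl in H0. rename X into X0.
    set (rho0 := upd qV ys y Y).
    assert (GR : GoodR rho0 (FVA (qAbs xs x X0))) by (apply GoodR_rho0; auto).
    assert (AD : AdmF rho0 (FVA (qAbs xs x X0))).
    { apply AdmF_rho0; auto. intro zs. apply tFVA. simpl; auto. }
    destruct (pick_fresh (S := fun w => RS rho0 (FVA (qAbs xs x X0)) xs w \/ qFree xs w Y \/ w = y \/ qFree xs w X0))
      as [w Hw].
    { smalltac. apply AD. }
    assert (FwX : ~ qFree xs w X0) by tauto.
    assert (FwY : ~ qFree xs w Y) by tauto.
    assert (Aw : admz rho0 xs x X0 w).
    { intros ws w' Hw' Hf. apply Hw. left. exists ws, w'. auto. }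
    assert (Az : admz rho0 xs x X0 (pickz rho0 xs x X0)) by (apply pickz_adm, adm_exists; auto).
    rewrite qPsubstAbs_eq. simpl.
    rewrite (FN H0 (SWall H0) GR AD Az Aw).
    assert (E : qPsubst (upd rho0 xs x (qV xs w)) X0 = qPsubst rho0 (qSwap xs w x X0)).
    { rewrite PS. apply PA. intros ws w' Hf. destruct (classic ((ws,w') = (xs,x))) as [e|n].
      - inversion e; subst. rewrite upd_eq, sw_b. unfold rho0. rewrite upd_neq; auto.
        intro e'; inversion e'; subst; tauto.
      - rewrite upd_neq by auto. rewrite sw_o; auto. intro e; inversion e; subst; tauto. }
    rewrite E.
    assert (IH : qF (qPsubst rho0 (qSwap xs w x X0)) = substT (qF (qSwap xs w x X0)) (qF Y) y ys).
    { apply (H ((xs,w,x) :: nil) Y ys y); auto. apply qGood_swap; auto. }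
    rewrite IH.
    rewrite <- (S3 HM).
    2: intro e; inversion e; subst; tauto.
    2: apply (qf_fresh HM); auto.
    f_equal. rewrite qF_swap by auto. symmetry. apply (R2 HM). apply (qf_fresh HM); auto.
Qed.

Lemma S_term (X Y : QT) ys y : qGood X -> qGood Y ->
  qF (qSubst X Y y ys) = substT (qF X) (qF Y) y ys.
Proof. intros; apply (proj1 S_gen); auto. Qed.
Lemma S_abs (A : QA) (Y : QT) ys y : qGoodAbs A -> qGood Y ->
  qFA (qSubstAbs A Y y ys) = substA (qFA A) (qF Y) y ys.
Proof. intros; apply (proj2 S_gen); auto. Qed.

End P6.

Scheme alpha_ind2 := Induction for alpha Sort Prop
  with alphaAbs_ind2 := Induction for alphaAbs Sort Prop.
Combined Scheme alpha_mutind from alpha_ind2, alphaAbs_ind2.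

Ltac swbrute := unfold swapv, eqdec;
  repeat (destruct excluded_middle_informative; simpl); try congruence;
  repeat match goal with H : (_,_) = (_,_) |- _ => inversion H; clear H; subst end; congruence.

Section P7.
Variables var varsort index bindex opsym : Type.
Hypothesis Hvar : infinite_regular var.
Notation QT := (qterm var varsort index bindex opsym).
Notation QA := (qabs var varsort index bindex opsym).
Notation qV := (@qVar var varsort index bindex opsym).
Local Notation sw := (@swapv var varsort).

Lemma alpha_ind_nd (P : QT -> QT -> Prop) (P0 : QA -> QA -> Prop) :
  (forall xs x, P (qV xs x) (qV xs x)) ->
  (forall d inp inp' binp binp',
     (forall i, inp i = None <-> inp' i = None) ->
     (forall i X X', inp i = Some X -> inp' i = Some X' -> alpha X X' /\ P X X') ->
     (forall i, binp i = None <-> binp' i = None) ->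
     (forall i A A', binp i = Some A -> binp' i = Some A' -> alphaAbs A A' /\ P0 A A') ->
     P (qOp d inp binp) (qOp d inp' binp')) ->
  (forall xs x x' X X' y, y <> x -> y <> x' -> ~ qFree xs y X -> ~ qFree xs y X' ->
     alpha (qSwap xs y x X) (qSwap xs y x' X') -> P (qSwap xs y x X) (qSwap xs y x' X') ->
     P0 (qAbs xs x X) (qAbs xs x' X')) ->
  (forall X X', alpha X X' -> P X X') /\ (forall A A', alphaAbs A A' -> P0 A A').
Proof.
  intros HV HO HA.
  apply (@alpha_mutind var varsort index bindex opsym (fun X X' _ => P X X') (fun A A' _ => P0 A A')); intros; auto.
  - apply HO; auto; intros; split; eauto.
  - eapply HA; eauto.
Qed.

Lemma sw_conj zs a b xs y x ws w :
  sw zs a b ws (sw xs y x ws w) = sw xs (sw zs a b xs y) (sw zs a b xs x) ws (sw zs a b ws w).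
Proof. swbrute. Qed.

Lemma swap_conj zs a b xs y x (X : QT) :
  qSwap zs a b (qSwap xs y x X) = qSwap xs (sw zs a b xs y) (sw zs a b xs x) (qSwap zs a b X).
Proof.
  rewrite !qSwap_Ren, !qRen_comp. f_equal.
  apply functional_extensionality; intro; apply functional_extensionality; intro; apply sw_conj.
Qed.

Lemma swap_comm zs a b (X : QT) : qSwap zs a b X = qSwap zs b a X.
Proof.
  rewrite !qSwap_Ren. f_equal.
  apply functional_extensionality; intro; apply functional_extensionality; intro; swbrute.
Qed.

Lemma swap_3 xs y y1 x (X : QT) : y <> y1 -> y <> x -> y1 <> x ->
  qSwap xs y y1 (qSwap xs y1 x X) = qSwap xs y x (qSwap xs y y1 X).
Proof.
  intros. rewrite !qSwap_Ren, !qRen_comp. f_equal.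
  apply functional_extensionality; intro; apply functional_extensionality; intro; swbrute.
Qed.

Lemma none_map (I B C D E : Type) (inp : I -> option B) (inp' : I -> option C) (f : B -> D) (g : C -> E) :
  (forall i, inp i = None <-> inp' i = None) ->
  forall i, (match inp i with Some x => Some (f x) | None => None end) = None <->
            (match inp' i with Some x => Some (g x) | None => None end) = None.
Proof.
  intros H i; specialize (H i); destruct (inp i), (inp' i); simpl.
  - split; discriminate.
  - exfalso; pose proof (proj2 H eq_refl); discriminate.
  - exfalso; pose proof (proj1 H eq_refl); discriminate.
  - tauto.
Qed.

Lemma alpha_equiv :
  (forall X X' : QT, alpha X X' -> forall zs a b, alpha (qSwap zs a b X) (qSwap zs a b X')) /\
  (forall A A' : QA, alphaAbs A A' -> forall zs a b, alphaAbs (qSwapAbs zs a b A) (qSwapAbs zs a b A')).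
Proof.
  apply alpha_ind_nd; intros.
  - constructor.
  - simpl. constructor.
    + apply none_map; auto.
    + intros i X X' E1 E2. destruct (inp i) eqn:F1; [|discriminate]. destruct (inp' i) eqn:F2; [|discriminate].
      inversion E1; inversion E2; subst. apply (H0 i _ _ F1 F2).
    + apply none_map; auto.
    + intros i X X' E1 E2. destruct (binp i) eqn:F1; [|discriminate]. destruct (binp' i) eqn:F2; [|discriminate].
      inversion E1; inversion E2; subst. apply (H2 i _ _ F1 F2).
  - simpl. apply alpha_Abs with (y := sw zs a b xs y).
    + intro E; apply sw_inj in E; auto.
    + intro E; apply sw_inj in E; auto.
    + rewrite qFree_swap, sw_invol; auto.
    + rewrite qFree_swap, sw_invol; auto.
    + rewrite <- !swap_conj. auto.
Qed.

Lemma alpha_swap (X X' : QT) zs a b : alpha X X' -> alpha (qSwap zs a b X) (qSwap zs a b X').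
Proof. intros; apply (proj1 alpha_equiv); auto. Qed.

Lemma alpha_free :
  (forall X X' : QT, alpha X X' -> forall ns n, qFree ns n X <-> qFree ns n X') /\
  (forall A A' : QA, alphaAbs A A' -> forall ns n, qFreeAbs ns n A <-> qFreeAbs ns n A').
Proof.
  apply alpha_ind_nd; intros.
  - tauto.
  - simpl. split; intros [[i Hi]|[i Hi]].
    + left; exists i. destruct (inp i) eqn:E1; [|contradiction]. destruct (inp' i) eqn:E2.
      apply (proj2 (H0 i _ _ E1 E2)); auto. apply H in E2; congruence.
    + right; exists i. destruct (binp i) eqn:E1; [|contradiction]. destruct (binp' i) eqn:E2.
      apply (proj2 (H2 i _ _ E1 E2)); auto. apply H1 in E2; congruence.
    + left; exists i. destruct (inp' i) eqn:E1; [|contradiction]. destruct (inp i) eqn:E2.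
      apply (proj2 (H0 i _ _ E2 E1)); auto. apply H in E2; congruence.
    + right; exists i. destruct (binp' i) eqn:E1; [|contradiction]. destruct (binp i) eqn:E2.
      apply (proj2 (H2 i _ _ E2 E1)); auto. apply H1 in E2; congruence.
  - simpl. assert (K : forall m, (qFree ns m (qSwap xs y x X) <-> qFree ns m (qSwap xs y x' X'))) by auto.
    destruct (classic (ns = xs)) as [es|nes].
    2: { assert (KK := K n). rewrite !qFree_swap in KK. rewrite !sw_o in KK; try (intro E; inversion E; congruence).
         split; intros [h1 h2]; split; try (intro E; inversion E; congruence); tauto. }
    subst ns.
    destruct (classic (n = y)) as [ey|ny].
    { subst. split; intros [h1 h2]; tauto. }
    destruct (classic (n = x)) as [ex|nx]; destruct (classic (n = x')) as [ex'|nx'].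
    + subst. split; intros [h1 h2]; exfalso; apply h1; reflexivity.
    + subst n. split; intros [h1 h2]; [exfalso; apply h1; reflexivity|].
      exfalso. assert (KK := K x). rewrite !qFree_swap in KK. rewrite sw_b in KK.
      rewrite sw_o in KK by (intro E; inversion E; congruence). tauto.
    + subst n. split; intros [h1 h2]; [|exfalso; apply h1; reflexivity].
      exfalso. assert (KK := K x'). rewrite !qFree_swap in KK. rewrite sw_b in KK.
      rewrite sw_o in KK by (intro E; inversion E; congruence). tauto.
    + assert (KK := K n). rewrite !qFree_swap in KK.
      rewrite !sw_o in KK by (intro E; inversion E; congruence).
      split; intros [h1 h2]; (split; [intro E; inversion E; congruence|]); tauto.
Qed.

Lemma alpha_free_t (X X' : QT) ns n : alpha X X' -> (qFree ns n X <-> qFree ns n X').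
Proof. intros; apply (proj1 alpha_free); auto. Qed.

Lemma alpha_good :
  (forall X X' : QT, alpha X X' -> (qGood X <-> qGood X')) /\
  (forall A A' : QA, alphaAbs A A' -> (qGoodAbs A <-> qGoodAbs A')).
Proof.
  apply alpha_ind_nd; intros.
  - tauto.
  - simpl. split; intros [G1 [G2 [G3 G4]]]; refine (conj _ (conj _ (conj _ _))).
    + apply (small_inp _ H); auto.
    + apply (small_inp _ H1); auto.
    + intro i. specialize (G3 i). destruct (inp' i) eqn:E2; auto. destruct (inp i) eqn:E1.
      apply (proj2 (H0 i _ _ E1 E2)); auto. apply H in E1; congruence.
    + intro i. specialize (G4 i). destruct (binp' i) eqn:E2; auto. destruct (binp i) eqn:E1.
      apply (proj2 (H2 i _ _ E1 E2)); auto. apply H1 in E1; congruence.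
    + apply (small_inp (inp:=inp') inp); [intro i; specialize (H i); tauto|]; auto.
    + apply (small_inp (inp:=binp') binp); [intro i; specialize (H1 i); tauto|]; auto.
    + intro i. specialize (G3 i). destruct (inp i) eqn:E1; auto. destruct (inp' i) eqn:E2.
      apply (proj2 (H0 i _ _ E1 E2)); auto. apply H in E2; congruence.
    + intro i. specialize (G4 i). destruct (binp i) eqn:E1; auto. destruct (binp' i) eqn:E2.
      apply (proj2 (H2 i _ _ E1 E2)); auto. apply H1 in E2; congruence.
  - simpl. rewrite <- (qGood_swap xs y x X), <- (qGood_swap xs y x' X'). auto.
Qed.

Lemma alpha_sym :
  (forall X X' : QT, alpha X X' -> alpha X' X) /\ (forall A A' : QA, alphaAbs A A' -> alphaAbs A' A).
Proof.
  apply alpha_ind_nd; intros.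
  - constructor.
  - constructor.
    + intro i; specialize (H i); tauto.
    + intros i X X' E1 E2. apply (H0 i _ _ E2 E1).
    + intro i; specialize (H1 i); tauto.
    + intros i X X' E1 E2. apply (H2 i _ _ E2 E1).
  - apply alpha_Abs with (y := y); auto.
Qed.

End P7.

Section P8.
Variables var varsort index bindex opsym : Type.
Hypothesis Hvar : infinite_regular var.
Notation QT := (qterm var varsort index bindex opsym).
Notation QA := (qabs var varsort index bindex opsym).
Notation qV := (@qVar var varsort index bindex opsym).
Local Notation sw := (@swapv var varsort).

Lemma uU (S1 S2 : var -> Prop) : small_set S1 -> small_set S2 -> small_set (fun x => S1 x \/ S2 x).
Proof. apply small_union; auto. Qed.
Lemma u1 (a : var) : small_set (fun x => x = a).
Proof. apply small_single; auto. Qed.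
Lemma uFV (X : QT) ws : qGood X -> small_set (fun z => qFree ws z X).
Proof. apply FV_small; auto. Qed.
Ltac smalltac := repeat first [ apply uU | apply u1 | (apply uFV; assumption) ].

Lemma alpha_refl_gen : (forall X : QT, qGood X -> alpha X X) /\ (forall A : QA, qGoodAbs A -> alphaAbs A A).
Proof.
  apply qt_ind_sw; intros.
  - constructor.
  - simpl in H1. destruct H1 as [_ [_ [G3 G4]]]. constructor; try tauto.
    + intros i X X' E1 E2. rewrite E1 in E2. inversion E2; subst. specialize (G3 i). rewrite E1 in G3.
      apply (H i _ E1 nil); auto.
    + intros i X X' E1 E2. rewrite E1 in E2. inversion E2; subst. specialize (G4 i). rewrite E1 in G4.
      apply (H0 i _ E1 nil); auto.
  - simpl in H0. destruct (small_fresh (S := fun z => qFree xs z X \/ z = x)) as [y Hy]; [smalltac|].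
    apply alpha_Abs with (y := y); try tauto.
    apply (H ((xs,y,x) :: nil)). apply qGood_swap; auto.
Qed.

Lemma alpha_refl (X : QT) : qGood X -> alpha X X.
Proof. apply (proj1 alpha_refl_gen). Qed.
Lemma alphaAbs_refl (A : QA) : qGoodAbs A -> alphaAbs A A.
Proof. apply (proj2 alpha_refl_gen). Qed.

Lemma alpha_sym_t (X X' : QT) : alpha X X' -> alpha X' X.
Proof. apply (proj1 (alpha_sym _ _ _ _ _)). Qed.

Lemma swap_3' zs y a b (Z : QT) : y <> a -> y <> b -> a <> b ->
  qSwap zs y a (qSwap zs a b Z) = qSwap zs y b (qSwap zs y a Z).
Proof.
  intros. rewrite !qSwap_Ren, !qRen_comp. f_equal.
  apply functional_extensionality; intro; apply functional_extensionality; intro; swbrute.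
Qed.

Lemma FS_gen :
  (forall X : QT, forall zs a b, qGood X -> ~ qFree zs a X -> ~ qFree zs b X -> alpha (qSwap zs a b X) X) /\
  (forall A : QA, forall zs a b, qGoodAbs A -> ~ qFreeAbs zs a A -> ~ qFreeAbs zs b A ->
     alphaAbs (qSwapAbs zs a b A) A).
Proof.
  apply qt_ind_both; intros.
  - simpl in *. rewrite sw_o by assumption. constructor.
  - simpl in H1. destruct H1 as [G1 [G2 [G3 G4]]]. simpl. constructor.
    + intro i; destruct (inp i); simpl; split; intro; congruence.
    + intros i X X' E1 E2. destruct (inp i) eqn:F; [|discriminate]. inversion E1; inversion E2; subst.
      specialize (G3 i); rewrite F in G3. apply (H i _ F); auto.
      * intro; apply H2; left; exists i; rewrite F; auto.
      * intro; apply H3; left; exists i; rewrite F; auto.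
    + intro i; destruct (binp i); simpl; split; intro; congruence.
    + intros i X X' E1 E2. destruct (binp i) eqn:F; [|discriminate]. inversion E1; inversion E2; subst.
      specialize (G4 i); rewrite F in G4. apply (H0 i _ F); auto.
      * intro; apply H2; right; exists i; rewrite F; auto.
      * intro; apply H3; right; exists i; rewrite F; auto.
  - rename xs into ws, x into w, X into Z. simpl in H0 |- *.
    destruct (classic (a = b)) as [eab|nab].
    { subst b. rewrite qSwap_same, sw_same. apply alphaAbs_refl. simpl; auto. }
    destruct (small_fresh (S := fun z => qFree ws z Z \/ z = w \/ z = a \/ z = b)) as [y Hy]; [smalltac|].
    destruct (sw_cases zs a b ws w) as [[E1 E2]|[[E1 E2]|[E0 [E1 E2]]]]; rewrite E2.
    + inversion E1; subst ws w.
      assert (Fb : ~ qFree zs b Z) by (intro; apply H2; simpl; split; auto; intro E; inversion E; auto).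
      apply alpha_Abs with (y := y); try tauto.
      * rewrite qFree_swap, sw_o; [tauto| |]; intro E; inversion E; tauto.
      * rewrite (swap_comm zs a b Z). rewrite (swap_3' zs (y:=y) (a:=b) (b:=a) Z) by (intro; subst; tauto).
        apply alpha_swap. apply H; auto.
    + inversion E1; subst ws w.
      assert (Fa : ~ qFree zs a Z) by (intro; apply H1; simpl; split; auto; intro E; inversion E; auto).
      apply alpha_Abs with (y := y); try tauto.
      * rewrite qFree_swap, sw_o; [tauto| |]; intro E; inversion E; tauto.
      * rewrite swap_3' by (intro; subst; tauto). apply alpha_swap. apply H; auto.
    + assert (Fa : ~ qFree zs a Z) by (intro; apply H1; simpl; split; auto).
      assert (Fb : ~ qFree zs b Z) by (intro; apply H2; simpl; split; auto).
      apply alpha_Abs with (y := y); try tauto.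
      * rewrite qFree_swap. rewrite sw_o; [tauto| |]; intro E; inversion E; subst; tauto.
      * apply alpha_swap. apply H; auto.
Qed.

Lemma FS (X : QT) zs a b : qGood X -> ~ qFree zs a X -> ~ qFree zs b X -> alpha (qSwap zs a b X) X.
Proof. intros; apply (proj1 FS_gen); auto. Qed.


Lemma alpha_good_t (X X' : QT) : alpha X X' -> qGood X -> qGood X'.
Proof. intros H G. apply (proj1 (alpha_good _ _ _ _ _) _ _ H); auto. Qed.
Lemma alphaAbs_good_t (A A' : QA) : alphaAbs A A' -> qGoodAbs A -> qGoodAbs A'.
Proof. intros H G. apply (proj2 (alpha_good _ _ _ _ _) _ _ H); auto. Qed.

Lemma alpha_Op_inv d inp binp (X' : QT) : alpha (qOp d inp binp) X' ->
  exists inp' binp', X' = qOp d inp' binp' /\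
    (forall i, inp i = None <-> inp' i = None) /\
    (forall i X X', inp i = Some X -> inp' i = Some X' -> alpha X X') /\
    (forall i, binp i = None <-> binp' i = None) /\
    (forall i A A', binp i = Some A -> binp' i = Some A' -> alphaAbs A A').
Proof. intros H; inversion H; subst. exists inp', binp'. auto 10. Qed.

Lemma alphaAbs_inv xs x (X : QT) (A' : QA) : alphaAbs (qAbs xs x X) A' ->
  exists x' X' y, A' = qAbs xs x' X' /\ y <> x /\ y <> x' /\ ~ qFree xs y X /\ ~ qFree xs y X' /\
    alpha (qSwap xs y x X) (qSwap xs y x' X').
Proof. intros H; inversion H; subst. exists x', X', y. auto 10. Qed.

Lemma alpha_trans_gen :
  (forall X : QT, qGood X -> forall X' X'', alpha X X' -> alpha X' X'' -> alpha X X'') /\ (forall A : QA, qGoodAbs A -> forall A' A'', alphaAbs A A' -> alphaAbs A' A'' -> alphaAbs A A'').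
Proof.
  apply qt_ind_sw; intros.
  - inversion H0; subst. auto.
  - simpl in H1. destruct H1 as [_ [_ [G3 G4]]].
    destruct (alpha_Op_inv H2) as [inp' [binp' [E [N1 [A1 [N2 A2]]]]]]. subst X'.
    destruct (alpha_Op_inv H3) as [inp'' [binp'' [E [N1' [A1' [N2' A2']]]]]]. subst X''.
    constructor.
    + intro i. rewrite N1. auto.
    + intros i X X'' E1 E3. destruct (inp' i) eqn:E2.
      * specialize (G3 i). rewrite E1 in G3. apply (H i _ E1 nil G3 q); eauto.
      * apply N1' in E2. congruence.
    + intro i. rewrite N2. auto.
    + intros i X X'' E1 E3. destruct (binp' i) eqn:E2.
      * specialize (G4 i). rewrite E1 in G4. apply (H0 i _ E1 nil G4 q); eauto.
      * apply N2' in E2. congruence.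
  - simpl in H0. rename X into X0.
    destruct (alphaAbs_inv H1) as [x1 [X1 [y1 [E [P1 [P2 [P3 [P4 P5]]]]]]]]. subst A'.
    destruct (alphaAbs_inv H2) as [x2 [X2 [y2 [E [Q1 [Q2 [Q3 [Q4 Q5]]]]]]]]. subst A''.
    assert (G1 : qGood X1).
    { apply qGood_swap with (zs := xs) (a := y1) (b := x1). eapply alpha_good_t; eauto. apply qGood_swap; auto. }
    assert (G2 : qGood X2).
    { apply qGood_swap with (zs := xs) (a := y2) (b := x2). eapply alpha_good_t; eauto. apply qGood_swap; auto. }
    destruct (small_fresh (S := fun z => qFree xs z X0 \/ qFree xs z X1 \/ qFree xs z X2 \/
       z = x \/ z = x1 \/ z = x2 \/ z = y1 \/ z = y2)) as [y Hy]; [smalltac|].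
    assert (T : forall B C, alpha (qSwap xs y x X0) B -> alpha B C -> alpha (qSwap xs y x X0) C).
    { intros B C. apply (H ((xs,y,x) :: nil)). apply qGood_swap; auto. }
    assert (NE : y <> y1 /\ y <> y2 /\ y <> x /\ y <> x1 /\ y <> x2) by (repeat split; intro; subst; tauto).
    destruct NE as [N1 [N2 [N3 [N4 N5]]]].
    assert (h1 : alpha (qSwap xs y x X0) (qSwap xs y y1 (qSwap xs y1 x X0))).
    { rewrite swap_3 by auto. apply alpha_sym_t, alpha_swap, FS; auto; tauto. }
    assert (h2 : alpha (qSwap xs y x X0) (qSwap xs y x1 (qSwap xs y y1 X1))).
    { rewrite <- swap_3 by auto. apply (T _ _ h1). apply alpha_swap; auto. }
    assert (h3 : alpha (qSwap xs y x X0) (qSwap xs y x1 X1)).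
    { apply (T _ _ h2). apply alpha_swap, FS; auto; tauto. }
    assert (h4 : alpha (qSwap xs y x X0) (qSwap xs y y2 (qSwap xs y2 x1 X1))).
    { rewrite swap_3 by auto. apply (T _ _ h3). apply alpha_sym_t, alpha_swap, FS; auto; tauto. }
    assert (h5 : alpha (qSwap xs y x X0) (qSwap xs y x2 (qSwap xs y y2 X2))).
    { rewrite <- swap_3 by auto. apply (T _ _ h4). apply alpha_swap; auto. }
    apply alpha_Abs with (y := y); try tauto.
    apply (T _ _ h5). apply alpha_swap, FS; auto; tauto.
Qed.

Lemma alpha_trans (X X' X'' : QT) : qGood X -> alpha X X' -> alpha X' X'' -> alpha X X''.
Proof. intros; eapply (proj1 alpha_trans_gen); eauto. Qed.
Lemma alphaAbs_trans (A A' A'' : QA) : qGoodAbs A -> alphaAbs A A' -> alphaAbs A' A'' -> alphaAbs A A''.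
Proof. intros; eapply (proj2 alpha_trans_gen); eauto. Qed.
Lemma alphaAbs_sym_t (A A' : QA) : alphaAbs A A' -> alphaAbs A' A.
Proof. apply (proj2 (alpha_sym _ _ _ _ _)). Qed.

Lemma alphaEq_good (X X' : QT) : alphaEq X X' -> (qGood X <-> qGood X').
Proof.
  induction 1.
  - split; intro; [eapply alpha_good_t|eapply alpha_good_t; [apply alpha_sym_t|]]; eauto.
  - tauto.
  - tauto.
  - tauto.
Qed.
Lemma alphaAbsEq_good (A A' : QA) : alphaAbsEq A A' -> (qGoodAbs A <-> qGoodAbs A').
Proof.
  induction 1.
  - split; intro; [eapply alphaAbs_good_t|eapply alphaAbs_good_t; [apply alphaAbs_sym_t|]]; eauto.
  - tauto.
  - tauto.
  - tauto.
Qed.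

Lemma alphaEq_alpha (X X' : QT) : alphaEq X X' -> qGood X -> alpha X X'.
Proof.
  induction 1; intros.
  - auto.
  - apply alpha_refl; auto.
  - apply alpha_sym_t. apply IHclos_refl_sym_trans. apply (alphaEq_good H); auto.
  - apply alpha_trans with y; auto. apply IHclos_refl_sym_trans2. apply (alphaEq_good H); auto.
Qed.
Lemma alphaAbsEq_alpha (A A' : QA) : alphaAbsEq A A' -> qGoodAbs A -> alphaAbs A A'.
Proof.
  induction 1; intros.
  - auto.
  - apply alphaAbs_refl; auto.
  - apply alphaAbs_sym_t. apply IHclos_refl_sym_trans. apply (alphaAbsEq_good H); auto.
  - apply alphaAbs_trans with y; auto. apply IHclos_refl_sym_trans2. apply (alphaAbsEq_good H); auto.
Qed.

Lemma alpha_abs_lift (X X' : QT) xs x : alpha X X' -> qGood X -> alphaAbs (qAbs xs x X) (qAbs xs x X').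
Proof.
  intros H G. destruct (small_fresh (S := fun z => qFree xs z X \/ z = x)) as [y Hy]; [smalltac|].
  apply alpha_Abs with (y := y); try tauto.
  - rewrite <- (alpha_free_t xs y H). tauto.
  - apply alpha_swap; auto.
Qed.

End P8.

Section P9.
Variables var varsort index bindex opsym : Type.
Hypothesis Hvar : infinite_regular var.
Notation QT := (qterm var varsort index bindex opsym).
Notation QA := (qabs var varsort index bindex opsym).
Notation qV := (@qVar var varsort index bindex opsym).
Notation TM := (term var varsort index bindex opsym).
Notation AB := (abs var varsort index bindex opsym).

Lemma rep_eq (t : TM) : proj1_sig t = alphaEq (rep t).
Proof. unfold rep. destruct (constructive_indefinite_description _ _) as [X HX]. simpl. exact HX. Qed.
Lemma repAbs_eq (t : AB) : proj1_sig t = alphaAbsEq (repAbs t).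
Proof. unfold repAbs. destruct (constructive_indefinite_description _ _) as [X HX]. simpl. exact HX. Qed.

Lemma term_ext (t t' : TM) : proj1_sig t = proj1_sig t' -> t = t'.
Proof. destruct t, t'; simpl; intro; subst; f_equal; apply proof_irrelevance. Qed.
Lemma abs_ext (t t' : AB) : proj1_sig t = proj1_sig t' -> t = t'.
Proof. destruct t, t'; simpl; intro; subst; f_equal; apply proof_irrelevance. Qed.

Lemma rep_cls (X : QT) : alphaEq X (rep (cls X)).
Proof.
  assert (E := rep_eq (cls X)). simpl in E.
  assert (K : alphaEq (rep (cls X)) (rep (cls X))) by apply rst_refl.
  rewrite <- E in K. exact K.
Qed.
Lemma repAbs_cls (A : QA) : alphaAbsEq A (repAbs (clsAbs A)).
Proof.
  assert (E := repAbs_eq (clsAbs A)). simpl in E.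
  assert (K : alphaAbsEq (repAbs (clsAbs A)) (repAbs (clsAbs A))) by apply rst_refl.
  rewrite <- E in K. exact K.
Qed.

Lemma cls_rep (t : TM) : cls (rep t) = t.
Proof. apply term_ext. simpl. symmetry; apply rep_eq. Qed.
Lemma clsAbs_rep (t : AB) : clsAbs (repAbs t) = t.
Proof. apply abs_ext. simpl. symmetry; apply repAbs_eq. Qed.

Lemma cls_eq (X X' : QT) : alphaEq X X' -> cls X = cls X'.
Proof.
  intro H. apply term_ext. simpl. apply functional_extensionality; intro Z.
  apply propositional_extensionality. split; intro K.
  - eapply rst_trans; [apply rst_sym; exact H| exact K].
  - eapply rst_trans; [exact H| exact K].
Qed.
Lemma clsAbs_eq (X X' : QA) : alphaAbsEq X X' -> clsAbs X = clsAbs X'.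
Proof.
  intro H. apply abs_ext. simpl. apply functional_extensionality; intro Z.
  apply propositional_extensionality. split; intro K.
  - eapply rst_trans; [apply rst_sym; exact H| exact K].
  - eapply rst_trans; [exact H| exact K].
Qed.

Lemma good_cls (X : QT) : good (cls X) <-> qGood X.
Proof. unfold good. symmetry. apply alphaEq_good. apply rep_cls. Qed.
Lemma goodAbs_cls (A : QA) : goodAbs (clsAbs A) <-> qGoodAbs A.
Proof. unfold goodAbs. symmetry. apply alphaAbsEq_good. apply repAbs_cls. Qed.

Variables (TT AA : Type)
  (VAR : varsort -> var -> TT)
  (OP : opsym -> input index TT -> input bindex AA -> TT)
  (ABS : varsort -> var -> TT -> AA)
  (FRESH : varsort -> var -> TT -> Prop)
  (FRESHABS : varsort -> var -> AA -> Prop)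
  (substT : TT -> TT -> var -> varsort -> TT)
  (substA : AA -> TT -> var -> varsort -> AA).
Hypothesis HM : FSModel VAR OP ABS FRESH FRESHABS substT substA.
Notation qF := (qf VAR OP ABS).
Notation qFA := (qfA VAR OP ABS).

Lemma alpha_qf :
  (forall X X' : QT, alpha X X' -> qGood X -> qF X = qF X') /\
  (forall A A' : QA, alphaAbs A A' -> qGoodAbs A -> qFA A = qFA A').
Proof.
  apply alpha_ind_nd; intros.
  - reflexivity.
  - simpl in H3. destruct H3 as [_ [_ [G3 G4]]]. simpl. f_equal; apply functional_extensionality; intro i.
    + specialize (G3 i). destruct (inp i) eqn:E1; destruct (inp' i) eqn:E2; auto.
      * f_equal. apply (proj2 (H0 i _ _ E1 E2)); auto.
      * apply H in E2; congruence.
      * apply H in E1; congruence.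
    + specialize (G4 i). destruct (binp i) eqn:E1; destruct (binp' i) eqn:E2; auto.
      * f_equal. apply (proj2 (H2 i _ _ E1 E2)); auto.
      * apply H1 in E2; congruence.
      * apply H1 in E1; congruence.
  - simpl in H5 |- *.
    assert (G' : qGood X').
    { apply (qGood_swap xs y x'). eapply alpha_good_t; eauto. apply qGood_swap; auto. }
    apply (R1 HM) with (y := y); auto.
    + apply (qf_fresh HM); auto.
    + apply (qf_fresh HM); auto.
    + rewrite <- !(qF_swap Hvar HM); auto. apply H4. apply qGood_swap; auto.
Qed.

Lemma alphaEq_qf (X X' : QT) : alphaEq X X' -> qGood X -> qF X = qF X'.
Proof. intros. apply (proj1 alpha_qf); auto. apply alphaEq_alpha; auto. Qed.
Lemma alphaAbsEq_qf (A A' : QA) : alphaAbsEq A A' -> qGoodAbs A -> qFA A = qFA A'.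
Proof. intros. apply (proj2 alpha_qf); auto. apply alphaAbsEq_alpha; auto. Qed.

Lemma qf_rep_cls (X : QT) : qGood X -> qF (rep (cls X)) = qF X.
Proof. intros; symmetry; apply alphaEq_qf; auto; apply rep_cls. Qed.
Lemma qfA_rep_cls (A : QA) : qGoodAbs A -> qFA (repAbs (clsAbs A)) = qFA A.
Proof. intros; symmetry; apply alphaAbsEq_qf; auto; apply repAbs_cls. Qed.

Lemma existence :
  FS_hom VAR OP ABS FRESH FRESHABS substT substA (fun t => qF (rep t)) (fun a => qFA (repAbs a)).
Proof.
  unfold FS_hom. refine (conj _ (conj _ (conj _ (conj _ (conj _ (conj _ _)))))).
  - intros xs x. unfold Var. rewrite qf_rep_cls; simpl; auto.
  - intros d inp binp L1 S1 L2 S2. unfold Op. rewrite qf_rep_cls.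
    + simpl. f_equal; apply functional_extensionality; intro i; unfold lift; destruct (inp i) || destruct (binp i); reflexivity.
    + simpl. refine (conj _ (conj _ (conj _ _))).
      * apply (small_inp (inp:=inp)); auto. intro i; unfold lift; destruct (inp i); simpl; split; intro; congruence.
      * apply (small_inp (inp:=binp)); auto. intro i; unfold lift; destruct (binp i); simpl; split; intro; congruence.
      * intro i. unfold lift. destruct (inp i) eqn:E; simpl; auto. apply (L1 i); auto.
      * intro i. unfold lift. destruct (binp i) eqn:E; simpl; auto. apply (L2 i); auto.
  - intros xs x X G. unfold Abs. rewrite qfA_rep_cls; simpl; auto.
  - intros X Y y ys GX GY. unfold subst. rewrite qf_rep_cls.
    + apply (S_term Hvar HM); auto.
    + apply PG; auto. intros; exact (GoodR_rho0 (rep Y) ys y (fun _ _ => True) GY ws w I).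
  - intros B Y y ys GB GY. unfold substAbs. rewrite qfA_rep_cls.
    + apply (S_abs Hvar HM); auto.
    + apply PGA; auto. intros; exact (GoodR_rho0 (rep Y) ys y (fun _ _ => True) GY ws w I).
  - intros xs x X G F. apply (qf_fresh HM); auto.
  - intros xs x B G F. apply (qfA_fresh HM); auto.
Qed.

Lemma uniqueness (g : TM -> TT) (gAbs : AB -> AA) :
  FS_hom VAR OP ABS FRESH FRESHABS substT substA g gAbs ->
  (forall X, good X -> qF (rep X) = g X) /\ (forall B, goodAbs B -> qFA (repAbs B) = gAbs B).
Proof.
  intros [hV [hO [hA _]]].
  assert (K : (forall X : QT, qGood X -> g (cls X) = qF X) /\ (forall A : QA, qGoodAbs A -> gAbs (clsAbs A) = qFA A)).
  { apply qt_ind_both; intros.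
    - apply hV.
    - simpl in H1. destruct H1 as [S1 [S2 [G3 G4]]].
      assert (E : cls (qOp d inp binp) = Op d (lift (@cls _ _ _ _ _) inp) (lift (@clsAbs _ _ _ _ _) binp)).
      { unfold Op. apply cls_eq. apply rst_step. constructor.
        - intro i; unfold lift; destruct (inp i); simpl; split; intro; congruence.
        - intros i X X' E1 E2. unfold lift in E2. rewrite E1 in E2. simpl in E2. inversion E2; subst.
          specialize (G3 i); rewrite E1 in G3. apply alphaEq_alpha; auto. apply rep_cls.
        - intro i; unfold lift; destruct (binp i); simpl; split; intro; congruence.
        - intros i X X' E1 E2. unfold lift in E2. rewrite E1 in E2. simpl in E2. inversion E2; subst.
          specialize (G4 i); rewrite E1 in G4. apply alphaAbsEq_alpha; auto. apply repAbs_cls. }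
      rewrite E. rewrite hO.
      + simpl. f_equal; apply functional_extensionality; intro i; unfold lift.
        * specialize (G3 i). destruct (inp i) eqn:F; simpl; auto. f_equal. apply (H i _ F); auto.
        * specialize (G4 i). destruct (binp i) eqn:F; simpl; auto. f_equal. apply (H0 i _ F); auto.
      + intros i a Ea. unfold lift in Ea. specialize (G3 i). destruct (inp i); inversion Ea; subst.
        apply good_cls; auto.
      + apply (small_inp (inp:=inp)); auto. intro i; unfold lift; destruct (inp i); simpl; split; intro; congruence.
      + intros i a Ea. unfold lift in Ea. specialize (G4 i). destruct (binp i); inversion Ea; subst.
        apply goodAbs_cls; auto.
      + apply (small_inp (inp:=binp)); auto. intro i; unfold lift; destruct (binp i); simpl; split; intro; congruence.
    - simpl in H0.
      assert (E : clsAbs (qAbs xs x X) = Abs xs x (cls X)).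
      { unfold Abs. apply clsAbs_eq. apply rst_step. apply alpha_abs_lift; auto.
        apply alphaEq_alpha; auto. apply rep_cls. }
      rewrite E, hA by (apply good_cls; auto). simpl. f_equal. apply H; auto. }
  split.
  - intros X G. rewrite <- (cls_rep X) at 2. symmetry. apply (proj1 K); auto.
  - intros B G. rewrite <- (clsAbs_rep B) at 2. symmetry. apply (proj2 K); auto.
Qed.

Lemma main_thm :
  exists (f : TM -> TT) (fAbs : AB -> AA),
    FS_hom VAR OP ABS FRESH FRESHABS substT substA f fAbs /\
    forall (g : TM -> TT) (gAbs : AB -> AA),
      FS_hom VAR OP ABS FRESH FRESHABS substT substA g gAbs ->
      (forall X, good X -> f X = g X) /\
      (forall B, goodAbs B -> fAbs B = gAbs B).
Proof.
  exists (fun t => qF (rep t)), (fun a => qFA (repAbs a)). split.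
  - apply existence.
  - intros g gAbs H. apply uniqueness; auto.
Qed.

End P9.

Theorem theorem2
  (var varsort index bindex opsym : Type)
  (Hvar : infinite_regular var)
  (T A : Type)
  (VAR : varsort -> var -> T)
  (OP : opsym -> input index T -> input bindex A -> T)
  (ABS : varsort -> var -> T -> A)
  (FRESH : varsort -> var -> T -> Prop)
  (FRESHABS : varsort -> var -> A -> Prop)
  (substT : T -> T -> var -> varsort -> T)
  (substA : A -> T -> var -> varsort -> A)
  (HM : FSModel VAR OP ABS FRESH FRESHABS substT substA) :
  exists (f : term var varsort index bindex opsym -> T)
         (fAbs : abs var varsort index bindex opsym -> A),
    FS_hom VAR OP ABS FRESH FRESHABS substT substA f fAbs /\
    forall (g : term var varsort index bindex opsym -> T)
           (gAbs : abs var varsort index bindex opsym -> A),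
      FS_hom VAR OP ABS FRESH FRESHABS substT substA g gAbs ->
      (forall X, good X -> f X = g X) /\
      (forall B, goodAbs B -> fAbs B = gAbs B).
Proof. exact (main_thm Hvar HM). Qed.
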